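(* Consider the two-route traffic model described in the context, under assumptions (A1)–(A6). The system has a unique equilibrium $\overline{x}\in\Omega$, and $\overline{x}$ is globally asymptotically stable on $\Omega$ (it is Lyapunov stable and every solution starting in $\Omega$ converges to $\overline{x}$).
   Context: Two routes $i=1,2$ connect an origin to a destination. For each route there are positive parameters $B_i$, $C_i$, $F_i$ with $C_i<B_i$; the demand is a constant $\phi>0$. Set $v_i=F_i/C_i$ and $E_i=v_iB_i$. The state $x=(x_1,x_2)\in\Omega:=[0,B_1]\times[0,B_2]$ evolves by $\dot x_i=\min\{\phi R_i(x),S_i(x_i)\}-D_i(x_i)$, $i=1,2$, with $S_i(x_i)=F_i$ if $x_i<C_i$, $S_i(x_i)=\frac{F_i}{B_i-C_i}(B_i-x_i)$ otherwise; $D_i(x_i)=v_ix_i$ if $x_i<C_i$, $D_i(x_i)=F_i$ otherwise. Routing ratios: $R_i(x)=(1-\alpha)r_i^0+\alpha\, r_i(\tau(x))$, with $\alpha\in(0,1]$, $r_1^0,r_2^0\ge0$, $r_1^0+r_2^0=1$, $\tau(x)=(\tau_1(x_1),\tau_2(x_2))$, each $\tau_i$ $C^1$ and strictly increasing, $0\le r_i(\tau(x))\le1$, $r_1(\tau(x))+r_2(\tau(x))=1$ on $\Omega$, $x\mapsto r_i(\tau(x))$ globally Lipschitz and $C^1$ on $\Omega$. Assumptions: (A1) $\phi<F_1+F_2$; (A2)–(A3) as just listed; (A4) $\partial R_i/\partial\tau_j>0$ for $i\ne j$; (A5) $F_i>(1-\alpha)\phi r_i^0$; (A6) $\phi<E_i$,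 $i=1,2$. *)

(* Defs.v *)
From Stdlib Require Import Reals.
From Coquelicot Require Import Coquelicot.
Open Scope R_scope.

(* Travel-time functions tau_i : R -> R and route choice functions
   r_i : R * R -> R, where r_i is evaluated at tau(x) = (tau1 x1, tau2 x2). *)
Record model := Model {
  B_1 : R; B_2 : R; C_1 : R; C_2 : R; F_1 : R; F_2 : R;
  phi : R;             (* constant demand *)
  alpha : R;
  r01 : R; r02 : R;
  tau1 : R -> R; tau2 : R -> R;
  r1 : R * R -> R; r2 : R * R -> R
}.

Definition v_1 (m : model) := F_1 m / C_1 m.
Definition v_2 (m : model) := F_2 m / C_2 m.
Definition E_1 (m : model) := v_1 m * B_1 m.
Definition E_2 (m : model) := v_2 m * B_2 m.

Definition in_Omega (m : model) (x : R * R) : Prop :=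
  0 <= fst x <= B_1 m /\ 0 <= snd x <= B_2 m.

Definition supply (B C F : R) (s : R) : R :=
  if Rlt_dec s C then F else F / (B - C) * (B - s).
Definition demand (C F : R) (s : R) : R :=
  if Rlt_dec s C then (F / C) * s else F.

Definition tau (m : model) (x : R * R) : R * R := (tau1 m (fst x), tau2 m (snd x)).

(* routing ratios as functions of the travel-time vector t = tau(x) *)
Definition Rt1 (m : model) (t : R * R) : R := (1 - alpha m) * r01 m + alpha m * r1 m t.
Definition Rt2 (m : model) (t : R * R) : R := (1 - alpha m) * r02 m + alpha m * r2 m t.
Definition Rx1 (m : model) (x : R * R) : R := Rt1 m (tau m x).
Definition Rx2 (m : model) (x : R * R) : R := Rt2 m (tau m x).

Definition fld1 (m : model) (x : R * R) : R :=
  Rmin (phi m * Rx1 m x) (supply (B_1 m) (C_1 m) (F_1 m) (fst x)) - demand (C_1 m) (F_1 m) (fst x).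
Definition fld2 (m : model) (x : R * R) : R :=
  Rmin (phi m * Rx2 m x) (supply (B_2 m) (C_2 m) (F_2 m) (snd x)) - demand (C_2 m) (F_2 m) (snd x).

Definition dist2 (x y : R * R) : R :=
  sqrt ((fst x - fst y) ^ 2 + (snd x - snd y) ^ 2).

Definition is_solution (m : model) (x : R -> R * R) : Prop :=
  (forall t, 0 <= t -> in_Omega m (x t)) /\
  filterlim (fun t => fst (x t)) (at_right 0) (locally (fst (x 0))) /\
  filterlim (fun t => snd (x t)) (at_right 0) (locally (snd (x 0))) /\
  (forall t, 0 < t ->
     is_derive (fun s => fst (x s)) t (fld1 m (x t)) /\
     is_derive (fun s => snd (x s)) t (fld2 m (x t))).

Definition is_equilibrium (m : model) (xb : R * R) : Prop :=
  in_Omega m xb /\ fld1 m xb = 0 /\ fld2 m xb = 0.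

Definition lyapunov_stable (m : model) (xb : R * R) : Prop :=
  forall eps, 0 < eps -> exists delta, 0 < delta /\
    forall x, is_solution m x -> dist2 (x 0) xb < delta ->
      forall t, 0 <= t -> dist2 (x t) xb < eps.

Definition globally_attractive (m : model) (xb : R * R) : Prop :=
  forall x, is_solution m x ->
    forall eps, 0 < eps -> exists T, forall t, T <= t -> dist2 (x t) xb < eps.

Definition C1_on_Omega (m : model) (g : R * R -> R) : Prop :=
  forall x, in_Omega m x ->
    ex_derive (fun s => g (s, snd x)) (fst x) /\
    ex_derive (fun s => g (fst x, s)) (snd x) /\
    continuity_2d_pt (fun a b => Derive (fun s => g (s, b)) a) (fst x) (snd x) /\
    continuity_2d_pt (fun a b => Derive (fun s => g (a, s)) b) (fst x) (snd x).

Definition lipschitz_on_Omega (m : model) (g : R * R -> R) : Prop :=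
  exists L, forall x y, in_Omega m x -> in_Omega m y ->
    Rabs (g x - g y) <= L * dist2 x y.

(* Main.v *)
Require Import Defs.
From Stdlib Require Import Reals Lra Classical ClassicalEpsilon.
From Coquelicot Require Import Coquelicot.
Open Scope R_scope.

Lemma deriv_cont (f : R -> R) (x l : R) : is_derive f x l ->
  forall eps, 0 < eps -> exists d, 0 < d /\ forall y, Rabs (y - x) < d -> Rabs (f y - f x) < eps.
Proof.
  intros H eps He.
  assert (C: continuity_pt f x).
  { apply continuity_pt_filterlim. apply (@ex_derive_continuous R_AbsRing R_NormedModule f x). exists l; exact H. }
  destruct (C eps He) as [a [Ha Hy]].
  exists a; split; auto. intros y Hyx.
  destruct (Req_dec y x) as [->|Hne].
  - rewrite Rminus_eq_0, Rabs_R0; auto.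
  - apply (Hy y). split. split. exact I. auto. exact Hyx.
Qed.

Lemma deriv_neg_right (f : R -> R) (x l : R) : is_derive f x l -> l < 0 ->
  exists d, 0 < d /\ forall r, x < r < x + d -> f r < f x.
Proof.
  intros H Hl. apply is_derive_Reals in H.
  destruct (H (- l)) as [d Hd]; [lra|].
  exists d; split; [apply cond_pos|]. intros r Hr.
  specialize (Hd (r - x)). 
  assert (Hne: r - x <> 0) by lra.
  assert (Hlt: Rabs (r - x) < d) by (rewrite Rabs_right; lra).
  specialize (Hd Hne Hlt).
  replace (x + (r - x)) with r in Hd by ring.
  apply Rabs_def2 in Hd. destruct Hd as [Hd1 _].
  assert (Q: (f r - f x) / (r - x) < 0) by lra.
  assert (P: 0 < r - x) by lra.
  assert (E: f r - f x = (f r - f x) / (r - x) * (r - x)) by (field; lra).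
  assert (f r - f x < 0). { rewrite E. set (q := (f r - f x) / (r - x)) in *. nra. }
  lra.
Qed.

Lemma right_cont_eps (f : R -> R) :
  filterlim f (at_right 0) (locally (f 0)) ->
  forall eps, 0 < eps -> exists d, 0 < d /\ forall t, 0 < t < d -> Rabs (f t - f 0) < eps.
Proof.
  intros H eps He.
  assert (L := H _ (locally_ball (f 0) (mkposreal eps He))).
  destruct L as [d Hd]. exists d. split; [apply cond_pos|].
  intros t Ht. apply (Hd t).
  - unfold ball; simpl; unfold AbsRing_ball, abs, minus, plus, opp; simpl. rewrite Rabs_right; lra.
  - lra.
Qed.

Lemma real_ind (P : R -> Prop) t0 :
  P t0 ->
  (forall s, t0 <= s -> P s -> exists d, 0 < d /\ forall r, s <= r < s + d -> P r) ->
  (forall s, t0 < s -> (forall r, t0 <= r < s -> P r) -> P s) ->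
  forall t, t0 <= t -> P t.
Proof.
  intros H0 Hstep Hlim t1 Ht1.
  apply NNPP; intro Hn.
  set (E := fun r => t0 <= r <= t1 /\ forall q, t0 <= q <= r -> P q).
  assert (Eb : bound E). { exists t1. intros r [Hr _]. lra. }
  assert (Ee : exists r, E r). { exists t0. split. lra. intros q Hq. replace q with t0 by lra. auto. }
  destruct (completeness E Eb Ee) as [s [Hub Hlub]].
  assert (Hs0 : t0 <= s). { apply Hub. destruct Ee. unfold E. split. lra. intros q Hq. replace q with t0 by lra. auto. }
  assert (Hs1 : s <= t1). { apply Hlub. intros r [Hr _]. lra. }
  assert (Hbel : forall q, t0 <= q < s -> P q).
  { intros q Hq. apply NNPP; intro Hq'.
    assert (s <= q). { apply Hlub. intros r [Hr1 Hr2]. destruct (Rle_dec r q) as [|Hrq]; auto.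
      exfalso. apply Hq'. apply Hr2. lra. }
    lra. }
  assert (Ps : P s). { destruct (Req_dec s t0) as [->|Hne]; auto. apply Hlim. lra. auto. }
  assert (Hst : s < t1). { destruct (Req_dec s t1) as [->|]; [contradiction|lra]. }
  destruct (Hstep s Hs0 Ps) as [d [Hd HP]].
  set (r := Rmin (s + d/2) t1).
  assert (Er : E r).
  { split. unfold r. split. apply Rmin_glb; lra. apply Rmin_r. intros q Hq.
    destruct (Rlt_dec q s). apply Hbel; lra. apply HP. split. lra.
    assert (r <= s + d/2) by (unfold r; apply Rmin_l). lra. }
  assert (r <= s) by (apply Hub; auto).
  unfold r in H. revert H. apply Rmin_case; lra.
Qed.

Lemma comp_step (y : R -> R) (d s U : R) : is_derive y s d -> y s <= U -> (y s = U -> d < 0) ->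
  exists e, 0 < e /\ forall r, s <= r < s + e -> y r <= U.
Proof.
  intros Hd Hs Hneg.
  destruct (Req_dec (y s) U) as [Heq|Hne].
  - destruct (deriv_neg_right y s d Hd (Hneg Heq)) as [e [He HH]].
    exists e; split; auto. intros r Hr. destruct (Req_dec r s) as [->|]; [lra|].
    assert (y r < y s) by (apply HH; lra). lra.
  - destruct (deriv_cont y s d Hd (U - y s)) as [e [He HH]]; [lra|].
    exists e; split; auto. intros r Hr. assert (Rabs (y r - y s) < U - y s) by (apply HH; rewrite Rabs_right; lra).
    apply Rabs_def2 in H. lra.
Qed.

Lemma comp_left (y : R -> R) (d s t0 U : R) : t0 < s -> is_derive y s d -> (forall r, t0 <= r < s -> y r <= U) -> y s <= U.
Proof.
  intros Hts Hd Hb. apply Rnot_lt_le; intro Hlt.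
  destruct (deriv_cont y s d Hd (y s - U)) as [e [He HH]]; [lra|].
  set (r := Rmax t0 (s - e/2)).
  assert (Hr2 : s - e/2 <= r) by apply Rmax_r.
  assert (Hr : t0 <= r < s) by (split; [apply Rmax_l| apply Rmax_lub_lt; lra]).
  assert (Rabs (y r - y s) < y s - U).
  { apply HH. rewrite Rabs_left; lra. }
  apply Rabs_def2 in H. specialize (Hb r Hr). lra.
Qed.

Lemma trap2 (y1 y2 g1 g2 : R -> R) t0 U1 U2 :
  (forall t, t0 <= t -> is_derive y1 t (g1 t) /\ is_derive y2 t (g2 t)) ->
  (forall t, t0 <= t -> y1 t = U1 -> y2 t <= U2 -> g1 t < 0) ->
  (forall t, t0 <= t -> y2 t = U2 -> y1 t <= U1 -> g2 t < 0) ->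
  y1 t0 <= U1 -> y2 t0 <= U2 -> forall t, t0 <= t -> y1 t <= U1 /\ y2 t <= U2.
Proof.
  intros Hd H1 H2 I1 I2.
  apply (real_ind (fun t => y1 t <= U1 /\ y2 t <= U2)); auto.
  - intros s Hs [P1 P2]. destruct (Hd s Hs) as [D1 D2].
    destruct (comp_step y1 (g1 s) s U1 D1 P1) as [e1 [He1 E1]]. { intros; apply H1; auto. }
    destruct (comp_step y2 (g2 s) s U2 D2 P2) as [e2 [He2 E2]]. { intros; apply H2; auto. }
    exists (Rmin e1 e2). split. apply Rmin_case; auto.
    intros r Hr. split. apply E1. assert (Rmin e1 e2 <= e1) by apply Rmin_l. lra.
    apply E2. assert (Rmin e1 e2 <= e2) by apply Rmin_r. lra.
  - intros s Hs HP. destruct (Hd s (Rlt_le _ _ Hs)) as [D1 D2]. split.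
    apply (comp_left y1 (g1 s) s t0); auto. intros r Hr; apply HP; auto.
    apply (comp_left y2 (g2 s) s t0); auto. intros r Hr; apply HP; auto.
Qed.

Lemma trap1 (y g : R -> R) t0 U :
  (forall t, t0 <= t -> is_derive y t (g t)) ->
  (forall t, t0 <= t -> y t = U -> g t < 0) ->
  y t0 <= U -> forall t, t0 <= t -> y t <= U.
Proof.
  intros Hd H1 I1 t Ht.
  refine (proj1 (trap2 y (fun _ => 0) g (fun _ => 0) t0 U 1 _ _ _ I1 _ t Ht)).
  - intros s Hs. split; auto. apply (is_derive_const 0 s).
  - intros; auto.
  - intros; lra.
  - lra.
Qed.

Lemma deriv_contpt (y : R -> R) t d : is_derive y t d -> continuity_pt y t.
Proof.
  intros H. apply continuity_pt_filterlim. apply (@ex_derive_continuous R_AbsRing R_NormedModule y t). exists d; exact H.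
Qed.

Lemma enter (y g : R -> R) T lo hi a mu :
  0 < mu -> (forall t, T <= t -> is_derive y t (g t)) -> (forall t, T <= t -> lo <= y t <= hi) ->
  (forall t, T <= t -> a <= y t -> g t <= - mu) ->
  exists T', T <= T' /\ forall t, T' <= t -> y t <= a.
Proof.
  intros Hmu Hd Hb Hg.
  assert (Hlh : lo <= hi) by (destruct (Hb T); lra).
  set (K := (hi - lo) / mu + 1).
  assert (HK : 0 < K). { unfold K. assert (0 <= (hi - lo)/mu) by (apply Rdiv_le_0_compat; lra). lra. }
  destruct (classic (exists t1, T <= t1 <= T + K /\ y t1 <= a)) as [[t1 [Ht1 Hy1]]|Hno].
  - exists t1. split. lra. intros t Ht. apply (trap1 y g t1 a); auto.
    + intros s Hs; apply Hd; lra.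
    + intros s Hs Heq. assert (g s <= - mu) by (apply Hg; lra). lra.
  - exfalso.
    assert (Hgt : forall t, T <= t <= T + K -> a < y t).
    { intros t Ht. apply Rnot_le_lt. intro. apply Hno. exists t. auto. }
    destruct (MVT_gen y T (T + K) g) as [c [Hc Hm]].
    + intros x Hx. rewrite Rmin_left in Hx by lra. apply Hd. lra.
    + intros x Hx. rewrite Rmin_left in Hx by lra. rewrite Rmax_right in Hx by lra.
      apply (deriv_contpt y x (g x)). apply Hd. lra.
    + rewrite Rmin_left in Hc by lra. rewrite Rmax_right in Hc by lra.
      assert (g c <= - mu) by (apply Hg; [lra| left; apply Hgt; lra]).
      replace (T + K - T) with K in Hm by ring.
      assert (g c * K <= - mu * K) by (apply Rmult_le_compat_r; lra).
      assert (mu * K = hi - lo + mu) by (unfold K; field; lra).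
      destruct (Hb T) as [_ Hb1]; [lra|]. destruct (Hb (T + K)) as [Hb2 _]; [lra|].
      lra.
Qed.

Definition clamp (B a : R) := Rmax 0 (Rmin B a).

Lemma clamp_lip B a b : 0 <= B -> Rabs (clamp B a - clamp B b) <= Rabs (a - b).
Proof.
  intros HB. unfold clamp, Rmax, Rmin.
  repeat destruct Rle_dec; unfold Rabs; repeat destruct Rcase_abs; lra.
Qed.

Lemma clamp_id B a : 0 <= a <= B -> clamp B a = a.
Proof. intros H. unfold clamp, Rmax, Rmin. repeat destruct Rle_dec; lra. Qed.

Lemma clamp_in B a : 0 <= B -> 0 <= clamp B a <= B.
Proof. intros H. unfold clamp, Rmax, Rmin. repeat destruct Rle_dec; lra. Qed.

Lemma eps_delta_contpt (k : R -> R) x :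
  (forall eps, 0 < eps -> exists d, 0 < d /\ forall y, Rabs (y - x) < d -> Rabs (k y - k x) < eps) ->
  continuity_pt k x.
Proof.
  intros H eps He. destruct (H eps He) as [d [Hd Hy]]. exists d. split; auto.
  intros y [_ Hyd]. apply Hy. exact Hyd.
Qed.

Section HFun.
Variables (Bx By : R) (F : R -> R -> R).
Hypothesis HBx : 0 < Bx.
Hypothesis Fdec : forall a b c, 0 <= a -> a < b -> b <= Bx -> 0 <= c <= By -> F b c < F a c.
Hypothesis Fmon : forall a c d, 0 <= a <= Bx -> 0 <= c -> c <= d -> d <= By -> F a c <= F a d.
Hypothesis Fz : forall c, 0 <= c <= By -> 0 <= F 0 c.
Hypothesis Ft : forall c, 0 <= c <= By -> F Bx c < 0.
Hypothesis Fca : forall a c, 0 <= a <= Bx -> 0 <= c <= By -> forall eps, 0 < eps -> exists d, 0 < d /\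
   forall a', 0 <= a' <= Bx -> Rabs (a' - a) < d -> Rabs (F a' c - F a c) < eps.
Hypothesis Fcc : forall a c, 0 <= a <= Bx -> 0 <= c <= By -> forall eps, 0 < eps -> exists d, 0 < d /\
   forall c', 0 <= c' <= By -> Rabs (c' - c) < d -> Rabs (F a c' - F a c) < eps.

Lemma F_zero_ex c : 0 <= c <= By -> exists a, 0 <= a < Bx /\ F a c = 0.
Proof.
  intros Hc.
  set (k := fun a => F (clamp Bx a) c).
  assert (Hk : continuity k).
  { intros x. apply eps_delta_contpt. intros eps He.
    destruct (Fca (clamp Bx x) c (clamp_in Bx x (Rlt_le _ _ HBx)) Hc eps He) as [d [Hd Hy]].
    exists d. split; auto. intros y Hyx. unfold k. apply Hy. apply clamp_in; lra.
    eapply Rle_lt_trans. apply clamp_lip; lra. auto. }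
  assert (k0 : k 0 = F 0 c) by (unfold k; rewrite clamp_id; auto; lra).
  assert (kB : k Bx = F Bx c) by (unfold k; rewrite clamp_id; auto; lra).
  destruct (IVT_gen k 0 Bx 0 Hk) as [x [Hx Hkx]].
  { rewrite k0, kB. specialize (Fz c Hc). specialize (Ft c Hc).
    rewrite Rmin_right by lra. rewrite Rmax_left by lra. lra. }
  rewrite Rmin_left in Hx by lra. rewrite Rmax_right in Hx by lra.
  unfold k in Hkx. rewrite clamp_id in Hkx by lra.
  exists x. split; auto. split. lra. destruct (Req_dec x Bx) as [->|]; [|lra].
  specialize (Ft c Hc). lra.
Qed.

Definition h (c : R) : R := epsilon (inhabits 0) (fun a => 0 <= a < Bx /\ F a c = 0).

Lemma h_spec c : 0 <= c <= By -> 0 <= h c < Bx /\ F (h c) c = 0.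
Proof.
  intros Hc. unfold h. apply (epsilon_spec (inhabits 0) (fun a => 0 <= a < Bx /\ F a c = 0)).
  apply F_zero_ex; auto.
Qed.

Lemma h_neg c a : 0 <= c <= By -> h c < a -> a <= Bx -> F a c < 0.
Proof. intros Hc H1 H2. destruct (h_spec c Hc) as [[H3 H4] H5]. rewrite <- H5. apply Fdec; auto. Qed.

Lemma h_pos c a : 0 <= c <= By -> 0 <= a -> a < h c -> 0 < F a c.
Proof. intros Hc H1 H2. destruct (h_spec c Hc) as [[H3 H4] H5]. rewrite <- H5. apply Fdec; auto; lra. Qed.

Lemma h_lt_of_neg c a : 0 <= c <= By -> 0 <= a <= Bx -> F a c < 0 -> h c < a.
Proof.
  intros Hc Ha HF. apply Rnot_le_lt. intro Hle. destruct Hle as [Hlt|Heq].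
  - assert (0 < F a c) by (apply h_pos; auto; lra). lra.
  - destruct (h_spec c Hc) as [_ H5]. rewrite <- Heq in H5. lra.
Qed.

Lemma h_gt_of_pos c a : 0 <= c <= By -> 0 <= a <= Bx -> 0 < F a c -> a < h c.
Proof.
  intros Hc Ha HF. apply Rnot_le_lt. intro Hle. destruct Hle as [Hlt|Heq].
  - assert (F a c < 0) by (apply h_neg; auto; lra). lra.
  - destruct (h_spec c Hc) as [_ H5]. rewrite Heq in H5. lra.
Qed.

Lemma h_mono c d : 0 <= c -> c <= d -> d <= By -> h c <= h d.
Proof.
  intros H1 H2 H3. apply Rnot_lt_le. intro Hlt.
  destruct (h_spec c) as [[Hc1 Hc2] Hc3]; [lra|].
  destruct (h_spec d) as [[Hd1 Hd2] Hd3]; [lra|].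
  assert (F (h c) d < 0) by (apply h_neg; auto; lra).
  assert (F (h c) c <= F (h c) d) by (apply Fmon; lra).
  lra.
Qed.

Lemma h_cont c : 0 <= c <= By -> forall eps, 0 < eps -> exists d, 0 < d /\
  forall c', 0 <= c' <= By -> Rabs (c' - c) < d -> Rabs (h c' - h c) < eps.
Proof.
  intros Hc eps He.
  destruct (h_spec c Hc) as [[Hh1 Hh2] Hh3].
  assert (Up : exists d, 0 < d /\ forall c', 0 <= c' <= By -> Rabs (c' - c) < d -> h c' < h c + eps).
  { destruct (Rle_dec (h c + eps/2) Bx) as [Hle|Hgt].
    - assert (Hn : F (h c + eps/2) c < 0) by (apply h_neg; auto; lra).
      destruct (Fcc (h c + eps/2) c) with (eps := - F (h c + eps/2) c) as [d [Hd Hy]]; auto; try lra.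
      exists d. split; auto. intros c' Hc' Hd'.
      specialize (Hy c' Hc' Hd'). apply Rabs_def2 in Hy.
      assert (h c' < h c + eps/2) by (apply h_lt_of_neg; auto; lra). lra.
    - exists 1. split; [lra|]. intros c' Hc' _. destruct (h_spec c' Hc') as [[? ?] _]. lra. }
  assert (Lo : exists d, 0 < d /\ forall c', 0 <= c' <= By -> Rabs (c' - c) < d -> h c - eps < h c').
  { destruct (Rle_dec 0 (h c - eps/2)) as [Hle|Hgt].
    - assert (Hn : 0 < F (h c - eps/2) c) by (apply h_pos; auto; lra).
      destruct (Fcc (h c - eps/2) c) with (eps := F (h c - eps/2) c) as [d [Hd Hy]]; auto; try lra.
      exists d. split; auto. intros c' Hc' Hd'.
      specialize (Hy c' Hc' Hd'). apply Rabs_def2 in Hy.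
      assert (h c - eps/2 < h c') by (apply h_gt_of_pos; auto; lra). lra.
    - exists 1. split; [lra|]. intros c' Hc' _. destruct (h_spec c' Hc') as [[? ?] _]. lra. }
  destruct Up as [d1 [Hd1 U]]. destruct Lo as [d2 [Hd2 L]].
  exists (Rmin d1 d2). split. apply Rmin_case; auto.
  intros c' Hc' Hd. assert (Rmin d1 d2 <= d1) by apply Rmin_l. assert (Rmin d1 d2 <= d2) by apply Rmin_r.
  specialize (U c' Hc' ltac:(lra)). specialize (L c' Hc' ltac:(lra)).
  apply Rabs_def1; lra.
Qed.

End HFun.

Lemma ivt_box (g : R -> R) B p q : 0 <= p -> p <= q -> q <= B ->
  (forall y, 0 <= y <= B -> forall eps, 0 < eps -> exists d, 0 < d /\
     forall y', 0 <= y' <= B -> Rabs (y' - y) < d -> Rabs (g y' - g y) < eps) ->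
  0 <= g p -> g q <= 0 -> exists z, p <= z <= q /\ g z = 0.
Proof.
  intros Hp Hpq HqB Hc Hgp Hgq.
  set (k := fun y => g (clamp B y)).
  assert (Hk : continuity k).
  { intros x. apply eps_delta_contpt. intros eps He.
    destruct (Hc (clamp B x) (clamp_in B x ltac:(lra)) eps He) as [d [Hd Hy]].
    exists d. split; auto. intros y Hyx. unfold k. apply Hy. apply clamp_in; lra.
    eapply Rle_lt_trans. apply clamp_lip; lra. auto. }
  assert (kp : k p = g p) by (unfold k; rewrite clamp_id; auto; lra).
  assert (kq : k q = g q) by (unfold k; rewrite clamp_id; auto; lra).
  destruct (IVT_gen k p q 0 Hk) as [x [Hx Hkx]].
  { rewrite kp, kq. split. eapply Rle_trans. apply Rmin_r. lra. eapply Rle_trans. 2: apply Rmax_l. lra. }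
  rewrite Rmin_left in Hx by lra. rewrite Rmax_right in Hx by lra.
  unfold k in Hkx. rewrite clamp_id in Hkx by lra.
  exists x. auto.
Qed.

Lemma neg_deriv (y : R -> R) t d : is_derive y t d -> is_derive (fun s => - y s) t (- d).
Proof. intros H. apply is_derive_Reals. apply derivable_pt_lim_opp. apply is_derive_Reals. exact H. Qed.

Lemma dist2_lt (a b : R * R) e : Rabs (fst a - fst b) < e / 2 -> Rabs (snd a - snd b) < e / 2 -> dist2 a b < e.
Proof.
  intros H1 H2. unfold dist2.
  assert (He : 0 < e) by (assert (0 <= Rabs (fst a - fst b)) by apply Rabs_pos; lra).
  rewrite <- (sqrt_pow2 e) by lra. apply sqrt_lt_1_alt. split.
  - assert (0 <= (fst a - fst b) ^ 2) by apply pow2_ge_0. assert (0 <= (snd a - snd b) ^ 2) by apply pow2_ge_0. lra.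
  - rewrite <- (pow2_abs (fst a - fst b)), <- (pow2_abs (snd a - snd b)).
    assert (0 <= Rabs (fst a - fst b)) by apply Rabs_pos. assert (0 <= Rabs (snd a - snd b)) by apply Rabs_pos.
    nra.
Qed.

Lemma dist2_ge1 (a b : R * R) : Rabs (fst a - fst b) <= dist2 a b.
Proof.
  unfold dist2. rewrite <- (sqrt_pow2 (Rabs (fst a - fst b))) by apply Rabs_pos.
  apply sqrt_le_1_alt. rewrite pow2_abs. assert (0 <= (snd a - snd b) ^ 2) by apply pow2_ge_0. lra.
Qed.

Lemma dist2_ge2 (a b : R * R) : Rabs (snd a - snd b) <= dist2 a b.
Proof.
  unfold dist2. rewrite <- (sqrt_pow2 (Rabs (snd a - snd b))) by apply Rabs_pos.
  apply sqrt_le_1_alt. rewrite pow2_abs. assert (0 <= (fst a - fst b) ^ 2) by apply pow2_ge_0. lra.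
Qed.
Section Gen.
Variables (B1 B2 : R) (f1 f2 : R * R -> R).
Hypothesis HB1 : 0 < B1.
Hypothesis HB2 : 0 < B2.
Hypothesis D1 : forall a b c, 0 <= a -> a < b -> b <= B1 -> 0 <= c <= B2 -> f1 (b, c) < f1 (a, c).
Hypothesis M1 : forall a c d, 0 <= a <= B1 -> 0 <= c -> c <= d -> d <= B2 -> f1 (a, c) <= f1 (a, d).
Hypothesis Z1 : forall c, 0 <= c <= B2 -> 0 <= f1 (0, c).
Hypothesis Tb1 : forall c, 0 <= c <= B2 -> f1 (B1, c) < 0.
Hypothesis CA1 : forall a c, 0 <= a <= B1 -> 0 <= c <= B2 -> forall eps, 0 < eps -> exists d, 0 < d /\
   forall a', 0 <= a' <= B1 -> Rabs (a' - a) < d -> Rabs (f1 (a', c) - f1 (a, c)) < eps.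
Hypothesis CC1 : forall a c, 0 <= a <= B1 -> 0 <= c <= B2 -> forall eps, 0 < eps -> exists d, 0 < d /\
   forall c', 0 <= c' <= B2 -> Rabs (c' - c) < d -> Rabs (f1 (a, c') - f1 (a, c)) < eps.
Hypothesis D2 : forall a b c, 0 <= a -> a < b -> b <= B2 -> 0 <= c <= B1 -> f2 (c, b) < f2 (c, a).
Hypothesis M2 : forall a c d, 0 <= a <= B2 -> 0 <= c -> c <= d -> d <= B1 -> f2 (c, a) <= f2 (d, a).
Hypothesis Z2 : forall c, 0 <= c <= B1 -> 0 <= f2 (c, 0).
Hypothesis Tb2 : forall c, 0 <= c <= B1 -> f2 (c, B2) < 0.
Hypothesis CA2 : forall a c, 0 <= a <= B2 -> 0 <= c <= B1 -> forall eps, 0 < eps -> exists d, 0 < d /\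
   forall a', 0 <= a' <= B2 -> Rabs (a' - a) < d -> Rabs (f2 (c, a') - f2 (c, a)) < eps.
Hypothesis CC2 : forall a c, 0 <= a <= B2 -> 0 <= c <= B1 -> forall eps, 0 < eps -> exists d, 0 < d /\
   forall c', 0 <= c' <= B1 -> Rabs (c' - c) < d -> Rabs (f2 (c', a) - f2 (c, a)) < eps.

Definition ib (x : R * R) := 0 <= fst x <= B1 /\ 0 <= snd x <= B2.
Definition eqb (x : R * R) := ib x /\ f1 x = 0 /\ f2 x = 0.
Hypothesis Uniq : forall x y, eqb x -> eqb y -> x = y.
Hypothesis Pos : forall x, eqb x -> 0 < fst x /\ 0 < snd x.

Definition h1 := h B1 (fun a c => f1 (a, c)).
Definition h2 := h B2 (fun a c => f2 (c, a)).

Lemma h1_spec c : 0 <= c <= B2 -> 0 <= h1 c < B1 /\ f1 (h1 c, c) = 0.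
Proof. intros. apply (h_spec B1 B2 (fun a c => f1 (a, c))); auto. Qed.
Lemma h2_spec c : 0 <= c <= B1 -> 0 <= h2 c < B2 /\ f2 (c, h2 c) = 0.
Proof. intros. apply (h_spec B2 B1 (fun a c => f2 (c, a))); auto. Qed.
Lemma h1_neg c a : 0 <= c <= B2 -> h1 c < a -> a <= B1 -> f1 (a, c) < 0.
Proof. intros. apply (h_neg B1 B2 (fun a c => f1 (a, c))); auto. Qed.
Lemma h2_neg c a : 0 <= c <= B1 -> h2 c < a -> a <= B2 -> f2 (c, a) < 0.
Proof. intros. apply (h_neg B2 B1 (fun a c => f2 (c, a))); auto. Qed.
Lemma h1_pos c a : 0 <= c <= B2 -> 0 <= a -> a < h1 c -> 0 < f1 (a, c).
Proof. intros. apply (h_pos B1 B2 (fun a c => f1 (a, c))); auto. Qed.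
Lemma h2_pos c a : 0 <= c <= B1 -> 0 <= a -> a < h2 c -> 0 < f2 (c, a).
Proof. intros. apply (h_pos B2 B1 (fun a c => f2 (c, a))); auto. Qed.
Lemma h1_mono c d : 0 <= c -> c <= d -> d <= B2 -> h1 c <= h1 d.
Proof. intros. apply (h_mono B1 B2 (fun a c => f1 (a, c))); auto. Qed.
Lemma h2_mono c d : 0 <= c -> c <= d -> d <= B1 -> h2 c <= h2 d.
Proof. intros. apply (h_mono B2 B1 (fun a c => f2 (c, a))); auto. Qed.
Lemma h1_cont c : 0 <= c <= B2 -> forall eps, 0 < eps -> exists d, 0 < d /\
  forall c', 0 <= c' <= B2 -> Rabs (c' - c) < d -> Rabs (h1 c' - h1 c) < eps.
Proof. intros. apply (h_cont B1 B2 (fun a c => f1 (a, c))); auto. Qed.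
Lemma h2_cont c : 0 <= c <= B1 -> forall eps, 0 < eps -> exists d, 0 < d /\
  forall c', 0 <= c' <= B1 -> Rabs (c' - c) < d -> Rabs (h2 c' - h2 c) < eps.
Proof. intros. apply (h_cont B2 B1 (fun a c => f2 (c, a))); auto. Qed.

Lemma f1_zero_h a c : 0 <= a <= B1 -> 0 <= c <= B2 -> f1 (a, c) = 0 -> a = h1 c.
Proof.
  intros Ha Hc H. destruct (Rtotal_order a (h1 c)) as [Hl|[He|Hg]]; auto.
  - assert (0 < f1 (a, c)) by (apply h1_pos; lra). lra.
  - assert (f1 (a, c) < 0) by (apply h1_neg; lra). lra.
Qed.
Lemma f2_zero_h a c : 0 <= a <= B2 -> 0 <= c <= B1 -> f2 (c, a) = 0 -> a = h2 c.
Proof.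
  intros Ha Hc H. destruct (Rtotal_order a (h2 c)) as [Hl|[He|Hg]]; auto.
  - assert (0 < f2 (c, a)) by (apply h2_pos; lra). lra.
  - assert (f2 (c, a) < 0) by (apply h2_neg; lra). lra.
Qed.

Lemma fix_eqb y : 0 <= y <= B1 -> h1 (h2 y) = y -> eqb (y, h2 y).
Proof.
  intros Hy Hf. destruct (h2_spec y Hy) as [H1 H2].
  split. split; simpl; lra. split; auto.
  destruct (h1_spec (h2 y)) as [_ H3]; [lra|]. rewrite Hf in H3. exact H3.
Qed.

Lemma Gk_cont y : 0 <= y <= B1 -> forall eps, 0 < eps -> exists d, 0 < d /\
  forall y', 0 <= y' <= B1 -> Rabs (y' - y) < d -> Rabs ((h1 (h2 y') - y') - (h1 (h2 y) - y)) < eps.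
Proof.
  intros Hy eps He.
  destruct (h2_spec y Hy) as [Hh2 _].
  destruct (h1_cont (h2 y) ltac:(lra) (eps/2)) as [d1 [Hd1 C1]]; [lra|].
  destruct (h2_cont y Hy d1 Hd1) as [d2 [Hd2 C2]].
  exists (Rmin d2 (eps/2)). split. apply Rmin_case; lra.
  intros y' Hy' Hd. assert (Rmin d2 (eps/2) <= d2) by apply Rmin_l. assert (Rmin d2 (eps/2) <= eps/2) by apply Rmin_r.
  destruct (h2_spec y' Hy') as [Hh2' _].
  specialize (C2 y' Hy' ltac:(lra)). specialize (C1 (h2 y') ltac:(lra) C2).
  replace (h1 (h2 y') - y' - (h1 (h2 y) - y)) with ((h1 (h2 y') - h1 (h2 y)) - (y' - y)) by ring.
  assert (Hd' : Rabs (y' - y) < eps/2) by lra.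
  apply Rabs_def2 in C1. apply Rabs_def2 in Hd'. apply Rabs_def1; lra.
Qed.

Lemma xb_ex : exists y, 0 <= y <= B1 /\ h1 (h2 y) = y.
Proof.
  destruct (ivt_box (fun y => h1 (h2 y) - y) B1 0 B1) as [z [Hz Hg]]; try lra.
  - intros y Hy eps He. apply Gk_cont; auto.
  - destruct (h1_spec (h2 0)) as [[? ?] _]. destruct (h2_spec 0); lra. lra.
  - destruct (h1_spec (h2 B1)) as [[? ?] _]. destruct (h2_spec B1); lra. lra.
  - exists z. split; auto. lra.
Qed.

Lemma eqb_h xb : eqb xb -> fst xb = h1 (snd xb) /\ snd xb = h2 (fst xb).
Proof.
  intros [[Hx1 Hx2] [E1 E2]]. split.
  - apply f1_zero_h; auto. rewrite <- surjective_pairing. auto.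
  - apply f2_zero_h; auto. rewrite <- surjective_pairing. auto.
Qed.

Lemma G_lt xb : eqb xb -> forall y, fst xb < y <= B1 -> h1 (h2 y) < y.
Proof.
  intros Hxb y Hy. apply Rnot_le_lt. intro Hge.
  destruct Hxb as [[Hx1 Hx2] HH].
  destruct (ivt_box (fun y => h1 (h2 y) - y) B1 y B1) as [z [Hz Hg]]; try lra.
  - intros w Hw eps He. apply Gk_cont; auto.
  - destruct (h1_spec (h2 B1)) as [[? ?] _]. destruct (h2_spec B1); lra. lra.
  - assert (E : (z, h2 z) = xb). { apply Uniq. apply fix_eqb. lra. lra. split; auto. split; auto. }
    rewrite <- E in Hy. simpl in Hy. lra.
Qed.

Lemma G_gt xb : eqb xb -> forall y, 0 <= y < fst xb -> y < h1 (h2 y).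
Proof.
  intros Hxb y Hy. apply Rnot_le_lt. intro Hge.
  destruct Hxb as [[Hx1 Hx2] HH].
  destruct (ivt_box (fun y => h1 (h2 y) - y) B1 0 y) as [z [Hz Hg]]; try lra.
  - intros w Hw eps He. apply Gk_cont; auto.
  - destruct (h1_spec (h2 0)) as [[? ?] _]. destruct (h2_spec 0); lra. lra.
  - assert (E : (z, h2 z) = xb). { apply Uniq. apply fix_eqb. lra. lra. split; auto. split; auto. }
    rewrite <- E in Hy. simpl in Hy. lra.
Qed.

Fixpoint Useq (n : nat) : R * R :=
  match n with O => (B1, B2) | S k => (h1 (snd (Useq k)), h2 (fst (Useq k))) end.
Fixpoint Lseq (n : nat) : R * R :=
  match n with O => (0, 0) | S k => (h1 (snd (Lseq k)), h2 (fst (Lseq k))) end.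

Lemma Useq_prop xb : eqb xb -> forall n, ib (Useq n) /\ fst xb <= fst (Useq n) /\ snd xb <= snd (Useq n) /\
  fst (Useq (S n)) <= fst (Useq n) /\ snd (Useq (S n)) <= snd (Useq n).
Proof.
  intros Hxb. destruct (eqb_h xb Hxb) as [E1 E2]. destruct Hxb as [[Hx1 Hx2] _].
  induction n as [|n IH].
  - simpl. destruct (h1_spec B2) as [[? ?] _]; [lra|]. destruct (h2_spec B1) as [[? ?] _]; [lra|].
    unfold ib; simpl. repeat split; lra.
  - destruct IH as [[Hu1 Hu2] [I1 [I2 [I3 I4]]]].
    change (Useq (S n)) with (h1 (snd (Useq n)), h2 (fst (Useq n))) in *.
    change (Useq (S (S n))) with (h1 (snd (Useq (S n))), h2 (fst (Useq (S n)))).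
    change (Useq (S n)) with (h1 (snd (Useq n)), h2 (fst (Useq n))).
    simpl in *.
    destruct (h1_spec (snd (Useq n))) as [[? ?] _]; [lra|]. destruct (h2_spec (fst (Useq n))) as [[? ?] _]; [lra|].
    unfold ib; simpl. repeat split; try lra.
    + rewrite E1. apply h1_mono; lra.
    + rewrite E2. apply h2_mono; lra.
    + apply h1_mono; lra.
    + apply h2_mono; lra.
Qed.

Lemma Lseq_prop xb : eqb xb -> forall n, ib (Lseq n) /\ fst (Lseq n) <= fst xb /\ snd (Lseq n) <= snd xb /\
  fst (Lseq n) <= fst (Lseq (S n)) /\ snd (Lseq n) <= snd (Lseq (S n)).
Proof.
  intros Hxb. destruct (eqb_h xb Hxb) as [E1 E2]. destruct Hxb as [[Hx1 Hx2] _].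
  induction n as [|n IH].
  - simpl. destruct (h1_spec 0) as [[? ?] _]; [lra|]. destruct (h2_spec 0) as [[? ?] _]; [lra|].
    unfold ib; simpl. repeat split; lra.
  - destruct IH as [[Hu1 Hu2] [I1 [I2 [I3 I4]]]].
    change (Lseq (S n)) with (h1 (snd (Lseq n)), h2 (fst (Lseq n))) in *.
    change (Lseq (S (S n))) with (h1 (snd (Lseq (S n))), h2 (fst (Lseq (S n)))).
    change (Lseq (S n)) with (h1 (snd (Lseq n)), h2 (fst (Lseq n))).
    simpl in *.
    destruct (h1_spec (snd (Lseq n))) as [[? ?] _]; [lra|]. destruct (h2_spec (fst (Lseq n))) as [[? ?] _]; [lra|].
    unfold ib; simpl. repeat split; try lra.
    + rewrite E1. apply h1_mono; lra.
    + rewrite E2. apply h2_mono; lra.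
    + apply h1_mono; lra.
    + apply h2_mono; lra.
Qed.

Lemma lim_fix xb (u : nat -> R * R) : eqb xb -> (forall n, ib (u n)) ->
  (forall n, u (S n) = (h1 (snd (u n)), h2 (fst (u n)))) ->
  ex_finite_lim_seq (fun n => fst (u n)) -> ex_finite_lim_seq (fun n => snd (u n)) ->
  is_lim_seq (fun n => fst (u n)) (fst xb) /\ is_lim_seq (fun n => snd (u n)) (snd xb).
Proof.
  intros Hxb Hib Hrec E1 E2.
  set (u1 := fun n => fst (u n)). set (u2 := fun n => snd (u n)).
  assert (L1 := Lim_seq_correct' u1 E1). assert (L2 := Lim_seq_correct' u2 E2).
  set (l1 := real (Lim_seq u1)) in *. set (l2 := real (Lim_seq u2)) in *.
  assert (B1l : 0 <= l1 <= B1).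
  { split.
    - assert (H := is_lim_seq_le (fun _ => 0) u1 0 l1 (fun n => proj1 (proj1 (Hib n))) (is_lim_seq_const 0) L1). exact H.
    - assert (H := is_lim_seq_le u1 (fun _ => B1) l1 B1 (fun n => proj2 (proj1 (Hib n))) L1 (is_lim_seq_const B1)). exact H. }
  assert (B2l : 0 <= l2 <= B2).
  { split.
    - assert (H := is_lim_seq_le (fun _ => 0) u2 0 l2 (fun n => proj1 (proj2 (Hib n))) (is_lim_seq_const 0) L2). exact H.
    - assert (H := is_lim_seq_le u2 (fun _ => B2) l2 B2 (fun n => proj2 (proj2 (Hib n))) L2 (is_lim_seq_const B2)). exact H. }
  assert (F1 : l1 = h1 l2).
  { assert (A : is_lim_seq (fun n => u1 (S n)) l1) by (apply -> is_lim_seq_incr_1; exact L1).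
    assert (B : is_lim_seq (fun n => u1 (S n)) (h1 l2)).
    { apply is_lim_seq_spec. intros eps.
      destruct (h1_cont l2 B2l eps (cond_pos eps)) as [d [Hd C]].
      apply is_lim_seq_spec in L2. destruct (L2 (mkposreal d Hd)) as [N HN].
      exists N. intros n Hn. unfold u1. rewrite Hrec. simpl. apply C. apply (Hib n). apply (HN n Hn). }
    apply is_lim_seq_unique in A. apply is_lim_seq_unique in B. rewrite A in B. injection B. auto. }
  assert (F2 : l2 = h2 l1).
  { assert (A : is_lim_seq (fun n => u2 (S n)) l2) by (apply -> is_lim_seq_incr_1; exact L2).
    assert (B : is_lim_seq (fun n => u2 (S n)) (h2 l1)).
    { apply is_lim_seq_spec. intros eps.
      destruct (h2_cont l1 B1l eps (cond_pos eps)) as [d [Hd C]].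
      apply is_lim_seq_spec in L1. destruct (L1 (mkposreal d Hd)) as [N HN].
      exists N. intros n Hn. unfold u2. rewrite Hrec. simpl. apply C. apply (Hib n). apply (HN n Hn). }
    apply is_lim_seq_unique in A. apply is_lim_seq_unique in B. rewrite A in B. injection B. auto. }
  assert (Eq : (l1, l2) = xb).
  { apply Uniq; auto. split. split; simpl; auto. simpl. split.
    - rewrite F1. apply h1_spec; auto.
    - rewrite F2. apply h2_spec; auto. }
  rewrite <- Eq. simpl. split; auto.
Qed.

Lemma Useq_conv xb : eqb xb -> forall eps, 0 < eps -> exists n,
  fst (Useq n) < fst xb + eps /\ snd (Useq n) < snd xb + eps.
Proof.
  intros Hxb eps He. assert (P := Useq_prop xb Hxb).
  destruct (lim_fix xb Useq Hxb) as [L1 L2].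
  - intros n; apply P.
  - intros n; reflexivity.
  - apply (ex_finite_lim_seq_decr _ 0). intros n; apply P. intros n; apply P.
  - apply (ex_finite_lim_seq_decr _ 0). intros n; apply P. intros n; apply P.
  - apply is_lim_seq_spec in L1. apply is_lim_seq_spec in L2.
    destruct (L1 (mkposreal eps He)) as [N1 H1]. destruct (L2 (mkposreal eps He)) as [N2 H2].
    exists (Nat.max N1 N2). simpl in *.
    specialize (H1 (Nat.max N1 N2) (Nat.le_max_l _ _)). specialize (H2 (Nat.max N1 N2) (Nat.le_max_r _ _)).
    apply Rabs_def2 in H1. apply Rabs_def2 in H2. lra.
Qed.

Lemma Lseq_conv xb : eqb xb -> forall eps, 0 < eps -> exists n,
  fst xb - eps < fst (Lseq n) /\ snd xb - eps < snd (Lseq n).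
Proof.
  intros Hxb eps He. assert (P := Lseq_prop xb Hxb).
  destruct (lim_fix xb Lseq Hxb) as [L1 L2].
  - intros n; apply P.
  - intros n; reflexivity.
  - apply (ex_finite_lim_seq_incr _ B1). intros n; apply P. intros n; apply P.
  - apply (ex_finite_lim_seq_incr _ B2). intros n; apply P. intros n; apply P.
  - apply is_lim_seq_spec in L1. apply is_lim_seq_spec in L2.
    destruct (L1 (mkposreal eps He)) as [N1 H1]. destruct (L2 (mkposreal eps He)) as [N2 H2].
    exists (Nat.max N1 N2). simpl in *.
    specialize (H1 (Nat.max N1 N2) (Nat.le_max_l _ _)). specialize (H2 (Nat.max N1 N2) (Nat.le_max_r _ _)).
    apply Rabs_def2 in H1. apply Rabs_def2 in H2. lra.
Qed.
Definition sol (x : R -> R * R) : Prop :=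
  (forall t, 0 <= t -> ib (x t)) /\
  filterlim (fun t => fst (x t)) (at_right 0) (locally (fst (x 0))) /\
  filterlim (fun t => snd (x t)) (at_right 0) (locally (snd (x 0))) /\
  (forall t, 0 < t ->
     is_derive (fun s => fst (x s)) t (f1 (x t)) /\
     is_derive (fun s => snd (x s)) t (f2 (x t))).

Lemma up1 x c : sol x -> 0 <= c <= B2 ->
  (forall eps, 0 < eps -> exists T, 1 <= T /\ forall t, T <= t -> snd (x t) <= c + eps) ->
  forall eps, 0 < eps -> exists T, 1 <= T /\ forall t, T <= t -> fst (x t) <= h1 c + eps.
Proof.
  intros [Hib [_ [_ Hd]]] Hc Hyp eps He.
  destruct (h1_cont c Hc (eps/2)) as [del [Hdel C]]; [lra|].
  destruct (Hyp (del/2)) as [T1 [HT1 HT]]; [lra|].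
  set (d := Rmin (c + del/2) B2).
  assert (Hd_def : d = Rmin (c + del/2) B2) by reflexivity.
  assert (Hd1 : d <= c + del/2) by apply Rmin_l. assert (Hd2 : d <= B2) by apply Rmin_r.
  assert (Hd3 : c <= d) by (apply Rmin_glb; lra).
  assert (Hhd : h1 d < h1 c + eps/2).
  { assert (Rabs (h1 d - h1 c) < eps/2) by (apply C; [lra| rewrite Rabs_right; lra]).
    apply Rabs_def2 in H. lra. }
  assert (Hx2 : forall t, T1 <= t -> snd (x t) <= d).
  { intros t Ht. apply Rmin_glb. apply HT; auto. apply (Hib t); lra. }
  set (a := h1 d + eps/2).
  assert (Ha_def : a = h1 d + eps/2) by reflexivity.
  destruct (Rle_dec B1 a) as [HBa|HBa].
  - exists T1. split; auto. intros t Ht. destruct (Hib t) as [[? ?] _]; lra.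
  - assert (Hfa : f1 (a, d) < 0) by (apply h1_neg; unfold a; lra).
    destruct (enter (fun s => fst (x s)) (fun s => f1 (x s)) T1 0 B1 a (- f1 (a, d))) as [T' [HT' HT'']].
    + lra.
    + intros t Ht. apply Hd. lra.
    + intros t Ht. apply (Hib t). lra.
    + intros t Ht Ha. cbv beta in Ha |- *. destruct (Hib t) as [Hi1 Hi2]; [lra|].
      rewrite (surjective_pairing (x t)).
      assert (f1 (fst (x t), snd (x t)) <= f1 (fst (x t), d)) by (apply M1; try lra; apply Hx2; lra).
      assert (f1 (fst (x t), d) <= f1 (a, d)).
      { destruct Ha as [Hlt|Heq]. left. apply D1; try lra. unfold a. destruct (h1_spec d); lra.
        rewrite Heq. lra. }
      lra.
    + exists T'. split. lra. intros t Ht. specialize (HT'' t Ht). simpl in HT''. lra.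
Qed.

Lemma low1 x c : sol x -> 0 <= c <= B2 ->
  (forall eps, 0 < eps -> exists T, 1 <= T /\ forall t, T <= t -> c - eps <= snd (x t)) ->
  forall eps, 0 < eps -> exists T, 1 <= T /\ forall t, T <= t -> h1 c - eps <= fst (x t).
Proof.
  intros [Hib [_ [_ Hd]]] Hc Hyp eps He.
  destruct (h1_cont c Hc (eps/2)) as [del [Hdel C]]; [lra|].
  destruct (Hyp (del/2)) as [T1 [HT1 HT]]; [lra|].
  set (d := Rmax (c - del/2) 0).
  assert (Hd_def : d = Rmax (c - del/2) 0) by reflexivity.
  assert (Hd1 : c - del/2 <= d) by apply Rmax_l. assert (Hd2 : 0 <= d) by apply Rmax_r.
  assert (Hd3 : d <= c) by (apply Rmax_lub; lra).
  assert (Hhd : h1 c - eps/2 < h1 d).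
  { assert (Rabs (h1 d - h1 c) < eps/2) by (apply C; [lra| rewrite Rabs_left1; lra]).
    apply Rabs_def2 in H. lra. }
  assert (Hx2 : forall t, T1 <= t -> d <= snd (x t)).
  { intros t Ht. apply Rmax_lub. specialize (HT t Ht). lra. apply (Hib t); lra. }
  set (a := h1 d - eps/2).
  assert (Ha_def : a = h1 d - eps/2) by reflexivity.
  destruct (Rle_dec a 0) as [HBa|HBa].
  - exists T1. split; auto. intros t Ht. destruct (Hib t) as [[? ?] _]; lra.
  - assert (Hfa : 0 < f1 (a, d)) by (apply h1_pos; unfold a; lra).
    destruct (enter (fun s => - fst (x s)) (fun s => - f1 (x s)) T1 (- B1) 0 (- a) (f1 (a, d))) as [T' [HT' HT'']].
    + lra.
    + intros t Ht. apply neg_deriv. apply Hd. lra.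
    + intros t Ht. destruct (Hib t) as [? _]; lra.
    + intros t Ht Ha. cbv beta in Ha |- *. destruct (Hib t) as [Hi1 Hi2]; [lra|].
      rewrite (surjective_pairing (x t)).
      assert (f1 (fst (x t), d) <= f1 (fst (x t), snd (x t))) by (apply M1; try lra; apply Hx2; lra).
      assert (f1 (a, d) <= f1 (fst (x t), d)).
      { destruct (Req_dec (fst (x t)) a) as [Heq|Hne]. rewrite Heq. lra.
        left. destruct (h1_spec d) as [[? ?] _]; [lra|]. apply D1; try lra. }
      lra.
    + exists T'. split. lra. intros t Ht. specialize (HT'' t Ht). simpl in HT''. lra.
Qed.

Lemma up2 x c : sol x -> 0 <= c <= B1 ->
  (forall eps, 0 < eps -> exists T, 1 <= T /\ forall t, T <= t -> fst (x t) <= c + eps) ->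
  forall eps, 0 < eps -> exists T, 1 <= T /\ forall t, T <= t -> snd (x t) <= h2 c + eps.
Proof.
  intros [Hib [_ [_ Hd]]] Hc Hyp eps He.
  destruct (h2_cont c Hc (eps/2)) as [del [Hdel C]]; [lra|].
  destruct (Hyp (del/2)) as [T1 [HT1 HT]]; [lra|].
  set (d := Rmin (c + del/2) B1).
  assert (Hd_def : d = Rmin (c + del/2) B1) by reflexivity.
  assert (Hd1 : d <= c + del/2) by apply Rmin_l. assert (Hd2 : d <= B1) by apply Rmin_r.
  assert (Hd3 : c <= d) by (apply Rmin_glb; lra).
  assert (Hhd : h2 d < h2 c + eps/2).
  { assert (Rabs (h2 d - h2 c) < eps/2) by (apply C; [lra| rewrite Rabs_right; lra]).
    apply Rabs_def2 in H. lra. }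
  assert (Hx2 : forall t, T1 <= t -> fst (x t) <= d).
  { intros t Ht. apply Rmin_glb. apply HT; auto. apply (Hib t); lra. }
  set (a := h2 d + eps/2).
  assert (Ha_def : a = h2 d + eps/2) by reflexivity.
  destruct (Rle_dec B2 a) as [HBa|HBa].
  - exists T1. split; auto. intros t Ht. destruct (Hib t) as [_ [? ?]]; lra.
  - assert (Hfa : f2 (d, a) < 0) by (apply h2_neg; unfold a; lra).
    destruct (enter (fun s => snd (x s)) (fun s => f2 (x s)) T1 0 B2 a (- f2 (d, a))) as [T' [HT' HT'']].
    + lra.
    + intros t Ht. apply Hd. lra.
    + intros t Ht. apply (Hib t). lra.
    + intros t Ht Ha. cbv beta in Ha |- *. destruct (Hib t) as [Hi1 Hi2]; [lra|].
      rewrite (surjective_pairing (x t)).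
      assert (f2 (fst (x t), snd (x t)) <= f2 (d, snd (x t))) by (apply M2; try lra; apply Hx2; lra).
      assert (f2 (d, snd (x t)) <= f2 (d, a)).
      { destruct Ha as [Hlt|Heq]. left. apply D2; try lra. unfold a. destruct (h2_spec d); lra.
        rewrite Heq. lra. }
      lra.
    + exists T'. split. lra. intros t Ht. specialize (HT'' t Ht). simpl in HT''. lra.
Qed.

Lemma low2 x c : sol x -> 0 <= c <= B1 ->
  (forall eps, 0 < eps -> exists T, 1 <= T /\ forall t, T <= t -> c - eps <= fst (x t)) ->
  forall eps, 0 < eps -> exists T, 1 <= T /\ forall t, T <= t -> h2 c - eps <= snd (x t).
Proof.
  intros [Hib [_ [_ Hd]]] Hc Hyp eps He.
  destruct (h2_cont c Hc (eps/2)) as [del [Hdel C]]; [lra|].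
  destruct (Hyp (del/2)) as [T1 [HT1 HT]]; [lra|].
  set (d := Rmax (c - del/2) 0).
  assert (Hd_def : d = Rmax (c - del/2) 0) by reflexivity.
  assert (Hd1 : c - del/2 <= d) by apply Rmax_l. assert (Hd2 : 0 <= d) by apply Rmax_r.
  assert (Hd3 : d <= c) by (apply Rmax_lub; lra).
  assert (Hhd : h2 c - eps/2 < h2 d).
  { assert (Rabs (h2 d - h2 c) < eps/2) by (apply C; [lra| rewrite Rabs_left1; lra]).
    apply Rabs_def2 in H. lra. }
  assert (Hx2 : forall t, T1 <= t -> d <= fst (x t)).
  { intros t Ht. apply Rmax_lub. specialize (HT t Ht). lra. apply (Hib t); lra. }
  set (a := h2 d - eps/2).
  assert (Ha_def : a = h2 d - eps/2) by reflexivity.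
  destruct (Rle_dec a 0) as [HBa|HBa].
  - exists T1. split; auto. intros t Ht. destruct (Hib t) as [_ [? ?]]; lra.
  - assert (Hfa : 0 < f2 (d, a)) by (apply h2_pos; unfold a; lra).
    destruct (enter (fun s => - snd (x s)) (fun s => - f2 (x s)) T1 (- B2) 0 (- a) (f2 (d, a))) as [T' [HT' HT'']].
    + lra.
    + intros t Ht. apply neg_deriv. apply Hd. lra.
    + intros t Ht. destruct (Hib t) as [_ ?]; lra.
    + intros t Ht Ha. cbv beta in Ha |- *. destruct (Hib t) as [Hi1 Hi2]; [lra|].
      rewrite (surjective_pairing (x t)).
      assert (f2 (d, snd (x t)) <= f2 (fst (x t), snd (x t))) by (apply M2; try lra; apply Hx2; lra).
      assert (f2 (d, a) <= f2 (d, snd (x t))).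
      { destruct (Req_dec (snd (x t)) a) as [Heq|Hne]. rewrite Heq. lra.
        left. destruct (h2_spec d) as [[? ?] _]; [lra|]. apply D2; try lra. }
      lra.
    + exists T'. split. lra. intros t Ht. specialize (HT'' t Ht). simpl in HT''. lra.
Qed.
Lemma claim_up x xb : sol x -> eqb xb -> forall n eps, 0 < eps -> exists T, 1 <= T /\
  forall t, T <= t -> fst (x t) <= fst (Useq n) + eps /\ snd (x t) <= snd (Useq n) + eps.
Proof.
  intros Hx Hxb n. assert (P := Useq_prop xb Hxb).
  induction n as [|n IH]; intros eps He.
  - exists 1. split. lra. intros t Ht. destruct Hx as [Hib _]. destruct (Hib t) as [[? ?] [? ?]]; [lra|].
    simpl. lra.
  - destruct (P n) as [[Hu1 Hu2] _].
    destruct (up1 x (snd (Useq n)) Hx Hu2) with (eps := eps) as [Ta [HTa HA]]; auto.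
    { intros e He'. destruct (IH e He') as [T [HT HH]]. exists T. split; auto. intros t Ht; apply HH; auto. }
    destruct (up2 x (fst (Useq n)) Hx Hu1) with (eps := eps) as [Tb [HTb HB]]; auto.
    { intros e He'. destruct (IH e He') as [T [HT HH]]. exists T. split; auto. intros t Ht; apply HH; auto. }
    exists (Rmax Ta Tb). split. eapply Rle_trans. apply HTa. apply Rmax_l.
    intros t Ht. simpl. split.
    + apply HA. eapply Rle_trans. apply Rmax_l. exact Ht.
    + apply HB. eapply Rle_trans. apply Rmax_r. exact Ht.
Qed.

Lemma claim_low x xb : sol x -> eqb xb -> forall n eps, 0 < eps -> exists T, 1 <= T /\
  forall t, T <= t -> fst (Lseq n) - eps <= fst (x t) /\ snd (Lseq n) - eps <= snd (x t).
Proof.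
  intros Hx Hxb n. assert (P := Lseq_prop xb Hxb).
  induction n as [|n IH]; intros eps He.
  - exists 1. split. lra. intros t Ht. destruct Hx as [Hib _]. destruct (Hib t) as [[? ?] [? ?]]; [lra|].
    simpl. lra.
  - destruct (P n) as [[Hu1 Hu2] _].
    destruct (low1 x (snd (Lseq n)) Hx Hu2) with (eps := eps) as [Ta [HTa HA]]; auto.
    { intros e He'. destruct (IH e He') as [T [HT HH]]. exists T. split; auto. intros t Ht; apply HH; auto. }
    destruct (low2 x (fst (Lseq n)) Hx Hu1) with (eps := eps) as [Tb [HTb HB]]; auto.
    { intros e He'. destruct (IH e He') as [T [HT HH]]. exists T. split; auto. intros t Ht; apply HH; auto. }
    exists (Rmax Ta Tb). split. eapply Rle_trans. apply HTa. apply Rmax_l.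
    intros t Ht. simpl. split.
    + apply HA. eapply Rle_trans. apply Rmax_l. exact Ht.
    + apply HB. eapply Rle_trans. apply Rmax_r. exact Ht.
Qed.

Lemma attract x xb : sol x -> eqb xb -> forall eps, 0 < eps -> exists T, forall t, T <= t -> dist2 (x t) xb < eps.
Proof.
  intros Hx Hxb eps He.
  destruct (Useq_conv xb Hxb (eps/4)) as [n1 [U1 U2]]; [lra|].
  destruct (Lseq_conv xb Hxb (eps/4)) as [n2 [L1 L2]]; [lra|].
  destruct (claim_up x xb Hx Hxb n1 (eps/8)) as [Ta [_ HA]]; [lra|].
  destruct (claim_low x xb Hx Hxb n2 (eps/8)) as [Tb [_ HB]]; [lra|].
  exists (Rmax Ta Tb). intros t Ht.
  destruct (HA t) as [A1 A2]. eapply Rle_trans. apply Rmax_l. exact Ht.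
  destruct (HB t) as [C1 C2]. eapply Rle_trans. apply Rmax_r. exact Ht.
  apply dist2_lt; apply Rabs_def1; lra.
Qed.

Lemma up_point xb : eqb xb -> forall eps, 0 < eps -> exists U1 U2,
  fst xb < U1 < fst xb + eps /\ U1 <= B1 /\ snd xb < U2 < snd xb + eps /\
  (forall x2, 0 <= x2 <= B2 -> x2 <= U2 -> f1 (U1, x2) < 0) /\
  (forall x1, 0 <= x1 <= B1 -> x1 <= U1 -> U2 <= B2 -> f2 (x1, U2) < 0).
Proof.
  intros Hxb eps He.
  destruct (eqb_h xb Hxb) as [E1 E2]. assert (Hb := proj1 Hxb). destruct Hb as [Hx1 Hx2].
  destruct (h1_spec (snd xb) Hx2) as [[Hh1 Hh2] _]. rewrite <- E1 in Hh2.
  destruct (h2_cont (fst xb) Hx1 (eps/2)) as [d2 [Hd2 C2]]; [lra|].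
  set (s := Rmin (Rmin (eps/2) ((B1 - fst xb)/2)) (d2/2)).
  assert (Hs1 : s <= eps/2) by (unfold s; eapply Rle_trans; [apply Rmin_l| apply Rmin_l]).
  assert (Hs2 : s <= (B1 - fst xb)/2) by (unfold s; eapply Rle_trans; [apply Rmin_l| apply Rmin_r]).
  assert (Hs3 : s <= d2/2) by (unfold s; apply Rmin_r).
  assert (Hs0 : 0 < s) by (unfold s; repeat apply Rmin_case; lra).
  set (U1 := fst xb + s). assert (HU1 : U1 = fst xb + s) by reflexivity.
  assert (HU1b : 0 <= U1 <= B1) by lra.
  assert (Hw1 : h2 U1 < snd xb + eps/2).
  { assert (Rabs (h2 U1 - h2 (fst xb)) < eps/2) by (apply C2; auto; rewrite Rabs_right; lra).
    apply Rabs_def2 in H. lra. }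
  assert (Hw2 : snd xb <= h2 U1) by (rewrite E2; apply h2_mono; lra).
  destruct (h2_spec U1 HU1b) as [[Hw3 Hw4] _].
  assert (HG : h1 (h2 U1) < U1) by (apply (G_lt xb Hxb); lra).
  destruct (h1_cont (h2 U1) ltac:(lra) (U1 - h1 (h2 U1))) as [d1 [Hd1 C1]]; [lra|].
  set (eta := Rmin (d1/2) (eps/4)).
  assert (He1 : eta <= d1/2) by apply Rmin_l. assert (He2 : eta <= eps/4) by apply Rmin_r.
  assert (He0 : 0 < eta) by (unfold eta; apply Rmin_case; lra).
  exists U1, (h2 U1 + eta). repeat split; try lra.
  - intros x2 Hx Hle.
    set (m := Rmin (h2 U1 + eta) B2).
    assert (Hm1 : m <= h2 U1 + eta) by apply Rmin_l. assert (Hm2 : m <= B2) by apply Rmin_r.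
    assert (Hm3 : h2 U1 <= m) by (apply Rmin_glb; lra).
    assert (Hhm : h1 m < U1).
    { assert (Rabs (h1 m - h1 (h2 U1)) < U1 - h1 (h2 U1)) by (apply C1; [lra| rewrite Rabs_right; lra]).
      apply Rabs_def2 in H. lra. }
    apply Rle_lt_trans with (f1 (U1, m)).
    + apply M1; try lra. apply Rmin_glb; lra.
    + apply h1_neg; lra.
  - intros x1 Hx Hle HB.
    apply Rle_lt_trans with (f2 (U1, h2 U1 + eta)).
    + apply M2; lra.
    + apply h2_neg; lra.
Qed.

Lemma low_point xb : eqb xb -> forall eps, 0 < eps -> exists L1 L2,
  fst xb - eps < L1 < fst xb /\ 0 <= L1 /\ snd xb - eps < L2 < snd xb /\
  (forall x2, 0 <= x2 <= B2 -> L2 <= x2 -> 0 < f1 (L1, x2)) /\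
  (forall x1, 0 <= x1 <= B1 -> L1 <= x1 -> 0 <= L2 -> 0 < f2 (x1, L2)).
Proof.
  intros Hxb eps He.
  destruct (eqb_h xb Hxb) as [E1 E2]. assert (Hb := proj1 Hxb). destruct Hb as [Hx1 Hx2].
  destruct (Pos xb Hxb) as [P1 P2].
  destruct (h2_cont (fst xb) Hx1 (eps/2)) as [d2 [Hd2 C2]]; [lra|].
  set (s := Rmin (Rmin (eps/2) (fst xb/2)) (d2/2)).
  assert (Hs1 : s <= eps/2) by (unfold s; eapply Rle_trans; [apply Rmin_l| apply Rmin_l]).
  assert (Hs2 : s <= fst xb/2) by (unfold s; eapply Rle_trans; [apply Rmin_l| apply Rmin_r]).
  assert (Hs3 : s <= d2/2) by (unfold s; apply Rmin_r).
  assert (Hs0 : 0 < s) by (unfold s; repeat apply Rmin_case; lra).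
  set (L1 := fst xb - s). assert (HL1 : L1 = fst xb - s) by reflexivity.
  assert (HL1b : 0 <= L1 <= B1) by lra.
  assert (Hw1 : snd xb - eps/2 < h2 L1).
  { assert (Rabs (h2 L1 - h2 (fst xb)) < eps/2) by (apply C2; auto; rewrite Rabs_left1; lra).
    apply Rabs_def2 in H. lra. }
  assert (Hw2 : h2 L1 <= snd xb) by (rewrite E2; apply h2_mono; lra).
  destruct (h2_spec L1 HL1b) as [[Hw3 Hw4] _].
  assert (HG : L1 < h1 (h2 L1)) by (apply (G_gt xb Hxb); lra).
  destruct (h1_cont (h2 L1) ltac:(lra) (h1 (h2 L1) - L1)) as [d1 [Hd1 C1]]; [lra|].
  set (eta := Rmin (d1/2) (eps/4)).
  assert (He1 : eta <= d1/2) by apply Rmin_l. assert (He2 : eta <= eps/4) by apply Rmin_r.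
  assert (He0 : 0 < eta) by (unfold eta; apply Rmin_case; lra).
  exists L1, (h2 L1 - eta). repeat split; try lra.
  - intros x2 Hx Hle.
    set (m := Rmax (h2 L1 - eta) 0).
    assert (Hm1 : h2 L1 - eta <= m) by apply Rmax_l. assert (Hm2 : 0 <= m) by apply Rmax_r.
    assert (Hm3 : m <= h2 L1) by (apply Rmax_lub; lra).
    assert (Hhm : L1 < h1 m).
    { assert (Rabs (h1 m - h1 (h2 L1)) < h1 (h2 L1) - L1) by (apply C1; [lra| rewrite Rabs_left1; lra]).
      apply Rabs_def2 in H. lra. }
    apply Rlt_le_trans with (f1 (L1, m)).
    + apply h1_pos; lra.
    + apply M1; try lra. apply Rmax_lub; lra.
  - intros x1 Hx Hle HB.
    apply Rlt_le_trans with (f2 (L1, h2 L1 - eta)).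
    + apply h2_pos; lra.
    + apply M2; lra.
Qed.
Lemma sol_trap_up x U1 U2 t0 : sol x -> 0 < t0 ->
  (forall x2, 0 <= x2 <= B2 -> x2 <= U2 -> f1 (U1, x2) < 0) ->
  (forall x1, 0 <= x1 <= B1 -> x1 <= U1 -> U2 <= B2 -> f2 (x1, U2) < 0) ->
  fst (x t0) <= U1 -> snd (x t0) <= U2 -> forall t, t0 <= t -> fst (x t) <= U1 /\ snd (x t) <= U2.
Proof.
  intros [Hib [_ [_ Hd]]] Ht0 F1 F2 I1 I2.
  apply (trap2 (fun s => fst (x s)) (fun s => snd (x s)) (fun s => f1 (x s)) (fun s => f2 (x s)) t0 U1 U2); auto.
  - intros t Ht. apply Hd. lra.
  - intros t Ht E H2. cbv beta in *. destruct (Hib t) as [Hi1 Hi2]; [lra|].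
    rewrite (surjective_pairing (x t)). rewrite E. apply F1; auto.
  - intros t Ht E H1. cbv beta in *. destruct (Hib t) as [Hi1 Hi2]; [lra|].
    rewrite (surjective_pairing (x t)). rewrite E. apply F2; auto. rewrite <- E. apply Hi2.
Qed.

Lemma sol_trap_low x L1 L2 t0 : sol x -> 0 < t0 ->
  (forall x2, 0 <= x2 <= B2 -> L2 <= x2 -> 0 < f1 (L1, x2)) ->
  (forall x1, 0 <= x1 <= B1 -> L1 <= x1 -> 0 <= L2 -> 0 < f2 (x1, L2)) ->
  L1 <= fst (x t0) -> L2 <= snd (x t0) -> forall t, t0 <= t -> L1 <= fst (x t) /\ L2 <= snd (x t).
Proof.
  intros [Hib [_ [_ Hd]]] Ht0 F1 F2 I1 I2 t Ht.
  assert (K : - fst (x t) <= - L1 /\ - snd (x t) <= - L2).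
  { apply (trap2 (fun s => - fst (x s)) (fun s => - snd (x s)) (fun s => - f1 (x s)) (fun s => - f2 (x s)) t0 (- L1) (- L2)); auto.
    - intros s Hs. destruct (Hd s) as [Da Db]; [lra|]. split; apply neg_deriv; auto.
    - intros s Hs E H2. cbv beta in *. destruct (Hib s) as [Hi1 Hi2]; [lra|].
      rewrite (surjective_pairing (x s)). replace (fst (x s)) with L1 by lra.
      assert (0 < f1 (L1, snd (x s))) by (apply F1; auto; lra). lra.
    - intros s Hs E H1. cbv beta in *. destruct (Hib s) as [Hi1 Hi2]; [lra|].
      rewrite (surjective_pairing (x s)). replace (snd (x s)) with L2 by lra.
      assert (0 < f2 (fst (x s), L2)) by (apply F2; auto; lra). lra.
    - lra.
    - lra. }
  lra.
Qed.

Lemma lyap xb : eqb xb -> forall eps, 0 < eps -> exists del, 0 < del /\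
  forall x, sol x -> dist2 (x 0) xb < del -> forall t, 0 <= t -> dist2 (x t) xb < eps.
Proof.
  intros Hxb eps He.
  destruct (up_point xb Hxb (eps/2)) as [U1 [U2 [HU1 [HU1b [HU2 [FU1 FU2]]]]]]; [lra|].
  destruct (low_point xb Hxb (eps/2)) as [L1 [L2 [HL1 [HL1b [HL2 [FL1 FL2]]]]]]; [lra|].
  set (del := Rmin (Rmin (U1 - fst xb) (U2 - snd xb)) (Rmin (fst xb - L1) (snd xb - L2))).
  assert (Hdel1 : del <= U1 - fst xb) by (unfold del; eapply Rle_trans; [apply Rmin_l| apply Rmin_l]).
  assert (Hdel2 : del <= U2 - snd xb) by (unfold del; eapply Rle_trans; [apply Rmin_l| apply Rmin_r]).
  assert (Hdel3 : del <= fst xb - L1) by (unfold del; eapply Rle_trans; [apply Rmin_r| apply Rmin_l]).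
  assert (Hdel4 : del <= snd xb - L2) by (unfold del; eapply Rle_trans; [apply Rmin_r| apply Rmin_r]).
  assert (Hdel0 : 0 < del) by (unfold del; repeat apply Rmin_case; lra).
  exists del. split; auto.
  intros x Hx Hx0 t Ht.
  assert (A1 := dist2_ge1 (x 0) xb). assert (A2 := dist2_ge2 (x 0) xb).
  assert (B1' : Rabs (fst (x 0) - fst xb) < del) by lra.
  assert (B2' : Rabs (snd (x 0) - snd xb) < del) by lra.
  apply Rabs_def2 in B1'. apply Rabs_def2 in B2'.
  assert (Box : L1 <= fst (x t) <= U1 /\ L2 <= snd (x t) <= U2).
  { destruct (Req_dec t 0) as [->|Htn]. { lra. }
    set (mu := Rmin (Rmin (U1 - fst (x 0)) (U2 - snd (x 0))) (Rmin (fst (x 0) - L1) (snd (x 0) - L2))).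
    assert (Hm1 : mu <= U1 - fst (x 0)) by (unfold mu; eapply Rle_trans; [apply Rmin_l| apply Rmin_l]).
    assert (Hm2 : mu <= U2 - snd (x 0)) by (unfold mu; eapply Rle_trans; [apply Rmin_l| apply Rmin_r]).
    assert (Hm3 : mu <= fst (x 0) - L1) by (unfold mu; eapply Rle_trans; [apply Rmin_r| apply Rmin_l]).
    assert (Hm4 : mu <= snd (x 0) - L2) by (unfold mu; eapply Rle_trans; [apply Rmin_r| apply Rmin_r]).
    assert (Hm0 : 0 < mu) by (unfold mu; repeat apply Rmin_case; lra).
    destruct Hx as [Hib [R1 [R2 Hd]]] eqn:Hxe.
    destruct (right_cont_eps (fun s => fst (x s)) R1 mu Hm0) as [t1 [Ht1 C1]].
    destruct (right_cont_eps (fun s => snd (x s)) R2 mu Hm0) as [t2 [Ht2 C2]].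
    set (t0 := Rmin t (Rmin t1 t2 / 2)).
    assert (Ht0a : t0 <= t) by apply Rmin_l.
    assert (Ht0b : t0 <= Rmin t1 t2 / 2) by apply Rmin_r.
    assert (Ht1' : Rmin t1 t2 <= t1) by apply Rmin_l. assert (Ht2' : Rmin t1 t2 <= t2) by apply Rmin_r.
    assert (Hmin : 0 < Rmin t1 t2) by (apply Rmin_case; lra).
    assert (Ht0c : 0 < t0) by (unfold t0; apply Rmin_case; lra).
    specialize (C1 t0 ltac:(lra)). specialize (C2 t0 ltac:(lra)). cbv beta in C1, C2.
    apply Rabs_def2 in C1. apply Rabs_def2 in C2.
    destruct (sol_trap_up x U1 U2 t0 Hx Ht0c FU1 FU2 ltac:(lra) ltac:(lra) t Ht0a).
    destruct (sol_trap_low x L1 L2 t0 Hx Ht0c FL1 FL2 ltac:(lra) ltac:(lra) t Ht0a).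
    lra. }
  apply dist2_lt; apply Rabs_def1; lra.
Qed.

Theorem gen_main : exists xb, eqb xb /\ (forall y, eqb y -> y = xb) /\
  (forall eps, 0 < eps -> exists del, 0 < del /\
    forall x, sol x -> dist2 (x 0) xb < del -> forall t, 0 <= t -> dist2 (x t) xb < eps) /\
  (forall x, sol x -> forall eps, 0 < eps -> exists T, forall t, T <= t -> dist2 (x t) xb < eps).
Proof.
  destruct xb_ex as [y [Hy Hf]].
  assert (Hxb := fix_eqb y Hy Hf).
  exists (y, h2 y). split; auto. split.
  - intros z Hz. apply Uniq; auto.
  - split. apply lyap; auto. intros x Hx. apply attract; auto.
Qed.
End Gen.
Section Link.
Variables (B C F : R).
Hypothesis HC : 0 < C.
Hypothesis HCB : C < B.
Hypothesis HF : 0 < F.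

Lemma sup_lt s : s < C -> supply B C F s = F.
Proof. intros H. unfold supply. destruct (Rlt_dec s C); [auto|lra]. Qed.
Lemma sup_ge s : C <= s -> supply B C F s = F / (B - C) * (B - s).
Proof. intros H. unfold supply. destruct (Rlt_dec s C); [lra|auto]. Qed.
Lemma dem_lt s : s < C -> demand C F s = F / C * s.
Proof. intros H. unfold demand. destruct (Rlt_dec s C); [auto|lra]. Qed.
Lemma dem_ge s : C <= s -> demand C F s = F.
Proof. intros H. unfold demand. destruct (Rlt_dec s C); [lra|auto]. Qed.

Lemma kS_pos : 0 < F / (B - C).
Proof. apply Rdiv_lt_0_compat; lra. Qed.
Lemma kD_pos : 0 < F / C.
Proof. apply Rdiv_lt_0_compat; lra. Qed.
Lemma kS_eq : F / (B - C) * (B - C) = F.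
Proof. field. lra. Qed.
Lemma kD_eq : F / C * C = F.
Proof. field. lra. Qed.

Lemma sup_nonincr a b : a <= b -> supply B C F b <= supply B C F a.
Proof.
  intros H. assert (K := kS_pos). assert (E := kS_eq).
  destruct (Rlt_dec b C).
  - rewrite !sup_lt by lra. lra.
  - rewrite (sup_ge b) by lra. destruct (Rlt_dec a C).
    + rewrite sup_lt by lra. set (k := F / (B - C)) in *. nra.
    + rewrite sup_ge by lra. set (k := F / (B - C)) in *. nra.
Qed.

Lemma sup_strict a b : C <= a -> a < b -> supply B C F b < supply B C F a.
Proof.
  intros H1 H2. assert (K := kS_pos). rewrite !sup_ge by lra. set (k := F / (B - C)) in *. nra.
Qed.

Lemma dem_nondec a b : a <= b -> demand C F a <= demand C F b.
Proof.
  intros H. assert (K := kD_pos). assert (E := kD_eq).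
  destruct (Rlt_dec b C).
  - rewrite !dem_lt by lra. set (k := F / C) in *. nra.
  - rewrite (dem_ge b) by lra. destruct (Rlt_dec a C).
    + rewrite dem_lt by lra. set (k := F / C) in *. nra.
    + rewrite dem_ge by lra. lra.
Qed.

Lemma dem_strict a b : a < C -> a < b -> demand C F a < demand C F b.
Proof.
  intros H1 H2. assert (K := kD_pos). assert (E := kD_eq). rewrite (dem_lt a) by lra.
  destruct (Rlt_dec b C).
  - rewrite dem_lt by lra. set (k := F / C) in *. nra.
  - rewrite dem_ge by lra. set (k := F / C) in *. nra.
Qed.

Lemma sup_lip a b : Rabs (supply B C F a - supply B C F b) <= F / (B - C) * Rabs (a - b).
Proof.
  assert (K := kS_pos). assert (E := kS_eq). set (k := F / (B - C)) in *.
  assert (G : forall a b, a <= b -> Rabs (supply B C F a - supply B C F b) <= k * (b - a)).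
  { intros u w Huw. assert (supply B C F w <= supply B C F u) by (apply sup_nonincr; auto).
    rewrite Rabs_right by lra.
    destruct (Rlt_dec w C).
    - rewrite !sup_lt by lra. nra.
    - rewrite (sup_ge w) by lra. destruct (Rlt_dec u C).
      + rewrite sup_lt by lra. fold k. nra.
      + rewrite sup_ge by lra. unfold k. nra. }
  destruct (Rle_dec a b).
  - rewrite (Rabs_left1 (a - b)) by lra. replace (- (a - b)) with (b - a) by ring. apply G; auto.
  - rewrite Rabs_minus_sym. rewrite (Rabs_right (a - b)) by lra. apply G; lra.
Qed.

Lemma dem_lip a b : Rabs (demand C F a - demand C F b) <= F / C * Rabs (a - b).
Proof.
  assert (K := kD_pos). assert (E := kD_eq). set (k := F / C) in *.
  assert (G : forall a b, a <= b -> Rabs (demand C F a - demand C F b) <= k * (b - a)).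
  { intros u w Huw. assert (demand C F u <= demand C F w) by (apply dem_nondec; auto).
    rewrite Rabs_left1 by lra.
    destruct (Rlt_dec w C).
    - rewrite !dem_lt by lra. fold k. nra.
    - rewrite (dem_ge w) by lra. destruct (Rlt_dec u C).
      + rewrite dem_lt by lra. fold k. nra.
      + rewrite dem_ge by lra. fold k. nra. }
  destruct (Rle_dec a b).
  - rewrite (Rabs_left1 (a - b)) by lra. replace (- (a - b)) with (b - a) by ring. apply G; auto.
  - rewrite Rabs_minus_sym. rewrite (Rabs_right (a - b)) by lra. apply G; lra.
Qed.

Lemma link_char p s : 0 <= s <= B -> Rmin p (supply B C F s) - demand C F s = 0 ->
  (s < C /\ F / C * s = p) \/ (s = C /\ F <= p).
Proof.
  intros Hs H. assert (K := kD_pos). assert (E := kD_eq). assert (K' := kS_pos). assert (E' := kS_eq).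
  destruct (Rlt_dec s C).
  - left. split; auto. rewrite sup_lt, dem_lt in H by lra.
    assert (F / C * s < F) by (set (k := F / C) in *; nra).
    revert H. unfold Rmin. destruct (Rle_dec p F); lra.
  - right. rewrite sup_ge, dem_ge in H by lra.
    assert (F / (B - C) * (B - s) <= F) by (set (k := F / (B - C)) in *; nra).
    revert H. unfold Rmin. destruct (Rle_dec p (F / (B - C) * (B - s))) as [Hp|Hp]; intros H.
    + split; [|lra]. assert (F / (B - C) * (B - s) = F) by lra.
      set (k := F / (B - C)) in *. nra.
    + split; [|lra]. assert (F / (B - C) * (B - s) = F) by lra.
      set (k := F / (B - C)) in *. nra.
Qed.

Lemma link_mono p s p' s' :
  ((s < C /\ F / C * s = p) \/ (s = C /\ F <= p)) ->
  ((s' < C /\ F / C * s' = p') \/ (s' = C /\ F <= p')) ->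
  p' <= p -> s' <= s.
Proof.
  intros H H' Hp. assert (K := kD_pos). assert (E := kD_eq).
  destruct H as [[H1 H2]|[H1 H2]]; destruct H' as [[H1' H2']|[H1' H2']]; try lra.
  - set (k := F / C) in *. nra.
  - set (k := F / C) in *. nra.
Qed.

End Link.
Lemma Rmin_lip p q p' q' : Rabs (Rmin p q - Rmin p' q') <= Rabs (p - p') + Rabs (q - q').
Proof. unfold Rmin. repeat destruct Rle_dec; unfold Rabs; repeat destruct Rcase_abs; lra. Qed.

Lemma Rmin_mono p q p' q' : p' <= p -> q' <= q -> Rmin p' q' <= Rmin p q.
Proof. intros. unfold Rmin. repeat destruct Rle_dec; lra. Qed.

Lemma Rmin_smono p q p' q' : p' < p -> q' < q -> Rmin p' q' < Rmin p q.
Proof. intros. unfold Rmin. repeat destruct Rle_dec; lra. Qed.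

Lemma dist2_same1 a a' c : dist2 (a', c) (a, c) = Rabs (a' - a).
Proof.
  unfold dist2; cbn [fst snd]. replace ((c - c) ^ 2) with 0 by ring. rewrite Rplus_0_r.
  rewrite <- pow2_abs. apply sqrt_pow2. apply Rabs_pos.
Qed.

Lemma dist2_same2 a c c' : dist2 (a, c') (a, c) = Rabs (c' - c).
Proof.
  unfold dist2; cbn [fst snd]. replace ((a - a) ^ 2) with 0 by ring. rewrite Rplus_0_l.
  rewrite <- pow2_abs. apply sqrt_pow2. apply Rabs_pos.
Qed.

Lemma lip_sep (g : R * R -> R) B1 B2 K : 0 < K ->
  (forall x y, (0 <= fst x <= B1 /\ 0 <= snd x <= B2) -> (0 <= fst y <= B1 /\ 0 <= snd y <= B2) ->
     Rabs (g x - g y) <= K * dist2 x y) ->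
  (forall a c, 0 <= a <= B1 -> 0 <= c <= B2 -> forall eps, 0 < eps -> exists d, 0 < d /\
     forall a', 0 <= a' <= B1 -> Rabs (a' - a) < d -> Rabs (g (a', c) - g (a, c)) < eps) /\
  (forall a c, 0 <= a <= B1 -> 0 <= c <= B2 -> forall eps, 0 < eps -> exists d, 0 < d /\
     forall c', 0 <= c' <= B2 -> Rabs (c' - c) < d -> Rabs (g (a, c') - g (a, c)) < eps).
Proof.
  intros HK HL. split.
  - intros a c Ha Hc eps He. exists (eps / K). split. apply Rdiv_lt_0_compat; auto.
    intros a' Ha' Hd. eapply Rle_lt_trans. apply HL; simpl; auto.
    rewrite dist2_same1. apply Rmult_lt_reg_l with (/ K). apply Rinv_0_lt_compat; auto.
    replace (/ K * (K * Rabs (a' - a))) with (Rabs (a' - a)) by (field; lra).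
    replace (/ K * eps) with (eps / K) by (field; lra). auto.
  - intros a c Ha Hc eps He. exists (eps / K). split. apply Rdiv_lt_0_compat; auto.
    intros c' Hc' Hd. eapply Rle_lt_trans. apply HL; simpl; auto.
    rewrite dist2_same2. apply Rmult_lt_reg_l with (/ K). apply Rinv_0_lt_compat; auto.
    replace (/ K * (K * Rabs (c' - c))) with (Rabs (c' - c)) by (field; lra).
    replace (/ K * eps) with (eps / K) by (field; lra). auto.
Qed.

Lemma fld_lip_gen (P : R * R -> R) (pr : R * R -> R) B C F (D : R * R -> Prop) cP :
  0 < C -> C < B -> 0 < F -> 0 <= cP ->
  (forall x y, D x -> D y -> Rabs (P x - P y) <= cP * dist2 x y) ->
  (forall x y, Rabs (pr x - pr y) <= dist2 x y) ->
  exists K, 0 < K /\ forall x y, D x -> D y ->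
    Rabs ((Rmin (P x) (supply B C F (pr x)) - demand C F (pr x)) -
          (Rmin (P y) (supply B C F (pr y)) - demand C F (pr y))) <= K * dist2 x y.
Proof.
  intros HC HCB HF HcP HP Hpr.
  assert (K1 := kS_pos B C F HCB HF). assert (K2 := kD_pos C F HC HF).
  exists (cP + F / (B - C) + F / C + 1). split. lra.
  intros x y Hx Hy.
  assert (L1 := Rmin_lip (P x) (supply B C F (pr x)) (P y) (supply B C F (pr y))).
  assert (L2 := sup_lip B C F HCB HF (pr x) (pr y)).
  assert (L3 := dem_lip C F HC HF (pr x) (pr y)).
  assert (L4 := HP x y Hx Hy). assert (L5 := Hpr x y).
  assert (Hd : 0 <= dist2 x y) by (unfold dist2; apply sqrt_pos).
  assert (Rabs ((Rmin (P x) (supply B C F (pr x)) - demand C F (pr x)) -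
          (Rmin (P y) (supply B C F (pr y)) - demand C F (pr y))) <=
          Rabs (Rmin (P x) (supply B C F (pr x)) - Rmin (P y) (supply B C F (pr y))) +
          Rabs (demand C F (pr x) - demand C F (pr y))).
  { set (u := Rmin (P x) (supply B C F (pr x)) - Rmin (P y) (supply B C F (pr y))).
    set (v := demand C F (pr x) - demand C F (pr y)).
    replace (Rmin (P x) (supply B C F (pr x)) - demand C F (pr x) -
      (Rmin (P y) (supply B C F (pr y)) - demand C F (pr y))) with (u - v) by (unfold u, v; ring).
    unfold Rabs; repeat destruct Rcase_abs; lra. }
  assert (F / (B - C) * Rabs (pr x - pr y) <= F / (B - C) * dist2 x y) by (apply Rmult_le_compat_l; lra).
  assert (F / C * Rabs (pr x - pr y) <= F / C * dist2 x y) by (apply Rmult_le_compat_l; lra).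
  nra.
Qed.
Lemma strict_inc_comp (g tau0 : R -> R) B : 0 < B ->
  (forall z, 0 <= z <= B -> ex_derive tau0 z) ->
  (forall a b, 0 <= a <= B -> 0 <= b <= B -> a < b -> tau0 a < tau0 b) ->
  (forall z, 0 <= z <= B -> exists d, 0 < d /\ is_derive g (tau0 z) d) ->
  forall u w, 0 <= u -> u < w -> w <= B -> g (tau0 u) < g (tau0 w).
Proof.
  intros HB Htd Hti Hg u w Hu Huw Hw.
  set (p := tau0 u). set (q := tau0 w).
  assert (Hpq : p < q) by (apply Hti; lra).
  assert (Hpre : forall s, p <= s <= q -> exists z, u <= z <= w /\ tau0 z = s).
  { intros s Hs.
    destruct (ivt_box (fun z => s - tau0 z) B u w) as [z [Hz Hz0]]; try lra.
    - intros y Hy eps He.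
      destruct (deriv_cont tau0 y (Derive tau0 y) (Derive_correct tau0 y (Htd y Hy)) eps He) as [d [Hd HH]].
      exists d. split; auto. intros y' Hy' Hyd.
      replace (s - tau0 y' - (s - tau0 y)) with (- (tau0 y' - tau0 y)) by ring.
      rewrite Rabs_Ropp. apply HH; auto.
    - unfold p in Hs. lra.
    - unfold q in Hs. lra.
    - exists z. split; auto. lra. }
  assert (Hder : forall s, p <= s <= q -> exists d, 0 < d /\ is_derive g s d).
  { intros s Hs. destruct (Hpre s Hs) as [z [Hz Hzs]]. rewrite <- Hzs. apply Hg. lra. }
  destruct (MVT_gen g p q (Derive g)) as [c [Hc Hm]].
  - intros x Hx. rewrite Rmin_left in Hx by lra. rewrite Rmax_right in Hx by lra.
    destruct (Hder x ltac:(lra)) as [d [Hd Hdd]]. rewrite (is_derive_unique g x d Hdd). auto.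
  - intros x Hx. rewrite Rmin_left in Hx by lra. rewrite Rmax_right in Hx by lra.
    destruct (Hder x Hx) as [d [Hd Hdd]]. apply (deriv_contpt g x d Hdd).
  - rewrite Rmin_left in Hc by lra. rewrite Rmax_right in Hc by lra.
    destruct (Hder c Hc) as [d [Hd Hdd]]. rewrite (is_derive_unique g c d Hdd) in Hm.
    assert (0 < d * (q - p)) by (apply Rmult_lt_0_compat; lra). fold p q. lra.
Qed.

Section Model.
Variable m : model.
Hypotheses (hB1 : 0 < B_1 m) (hB2 : 0 < B_2 m) (hC1 : 0 < C_1 m) (hC2 : 0 < C_2 m)
  (hF1 : 0 < F_1 m) (hF2 : 0 < F_2 m)
  (hCB1 : C_1 m < B_1 m) (hCB2 : C_2 m < B_2 m)
  (hphi : 0 < phi m).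
Hypothesis halpha : 0 < alpha m <= 1.
Hypothesis hr0 : 0 <= r01 m /\ 0 <= r02 m /\ r01 m + r02 m = 1.
Hypothesis htau1 : forall s, 0 <= s <= B_1 m ->
      ex_derive (tau1 m) s /\ continuous (Derive (tau1 m)) s.
Hypothesis htau2 : forall s, 0 <= s <= B_2 m ->
      ex_derive (tau2 m) s /\ continuous (Derive (tau2 m)) s.
Hypothesis htau1_incr : forall a b, 0 <= a <= B_1 m -> 0 <= b <= B_1 m -> a < b -> tau1 m a < tau1 m b.
Hypothesis htau2_incr : forall a b, 0 <= a <= B_2 m -> 0 <= b <= B_2 m -> a < b -> tau2 m a < tau2 m b.
Hypothesis hr_bounds : forall x, in_Omega m x ->
      0 <= r1 m (tau m x) <= 1 /\ 0 <= r2 m (tau m x) <= 1.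
Hypothesis hr_sum : forall x, in_Omega m x -> r1 m (tau m x) + r2 m (tau m x) = 1.
Hypothesis hr1_lip : lipschitz_on_Omega m (fun x => r1 m (tau m x)).
Hypothesis hr2_lip : lipschitz_on_Omega m (fun x => r2 m (tau m x)).
Hypothesis A4_12 : forall x, in_Omega m x -> exists d, 0 < d /\
      is_derive (fun s => Rt1 m (fst (tau m x), s)) (snd (tau m x)) d.
Hypothesis A4_21 : forall x, in_Omega m x -> exists d, 0 < d /\
      is_derive (fun s => Rt2 m (s, snd (tau m x))) (fst (tau m x)) d.

Lemma R_sum x : in_Omega m x -> Rx1 m x + Rx2 m x = 1.
Proof.
  intros Hx. unfold Rx1, Rx2, Rt1, Rt2. destruct hr0 as [_ [_ H0]]. assert (H1 := hr_sum x Hx).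
  transitivity ((1 - alpha m) * (r01 m + r02 m) + alpha m * (r1 m (tau m x) + r2 m (tau m x))). ring.
  rewrite H0, H1. ring.
Qed.

Lemma R1_nonneg x : in_Omega m x -> 0 <= Rx1 m x.
Proof.
  intros Hx. unfold Rx1, Rt1. destruct hr0 as [H1 _]. destruct (hr_bounds x Hx) as [[H2 _] _].
  assert (0 <= (1 - alpha m) * r01 m) by (apply Rmult_le_pos; lra).
  assert (0 <= alpha m * r1 m (tau m x)) by (apply Rmult_le_pos; lra). lra.
Qed.

Lemma R2_nonneg x : in_Omega m x -> 0 <= Rx2 m x.
Proof.
  intros Hx. unfold Rx2, Rt2. destruct hr0 as [_ [H1 _]]. destruct (hr_bounds x Hx) as [_ [H2 _]].
  assert (0 <= (1 - alpha m) * r02 m) by (apply Rmult_le_pos; lra).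
  assert (0 <= alpha m * r2 m (tau m x)) by (apply Rmult_le_pos; lra). lra.
Qed.

Lemma R1_inc2 a u w : 0 <= a <= B_1 m -> 0 <= u -> u < w -> w <= B_2 m -> Rx1 m (a, u) < Rx1 m (a, w).
Proof.
  intros Ha Hu Huw Hw. unfold Rx1, tau. cbn [fst snd].
  apply (strict_inc_comp (fun s => Rt1 m (tau1 m a, s)) (tau2 m) (B_2 m)); auto.
  - intros z Hz. apply htau2; auto.
  - intros z Hz. apply (A4_12 (a, z)). split; simpl; auto.
Qed.

Lemma R2_inc1 c u w : 0 <= c <= B_2 m -> 0 <= u -> u < w -> w <= B_1 m -> Rx2 m (u, c) < Rx2 m (w, c).
Proof.
  intros Hc Hu Huw Hw. unfold Rx2, tau. cbn [fst snd].
  apply (strict_inc_comp (fun s => Rt2 m (s, tau2 m c)) (tau1 m) (B_1 m)); auto.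
  - intros z Hz. apply htau1; auto.
  - intros z Hz. apply (A4_21 (z, c)). split; simpl; auto.
Qed.

Lemma R1_dec1 c u w : 0 <= c <= B_2 m -> 0 <= u -> u < w -> w <= B_1 m -> Rx1 m (w, c) < Rx1 m (u, c).
Proof.
  intros. assert (H3 := R2_inc1 c u w H H0 H1 H2).
  assert (E1 := R_sum (u, c) ltac:(split; simpl; lra)). assert (E2 := R_sum (w, c) ltac:(split; simpl; lra)). lra.
Qed.

Lemma R2_dec2 a u w : 0 <= a <= B_1 m -> 0 <= u -> u < w -> w <= B_2 m -> Rx2 m (a, w) < Rx2 m (a, u).
Proof.
  intros. assert (H3 := R1_inc2 a u w H H0 H1 H2).
  assert (E1 := R_sum (a, u) ltac:(split; simpl; lra)). assert (E2 := R_sum (a, w) ltac:(split; simpl; lra)). lra.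
Qed.

Lemma P1_lip : exists cP, 0 <= cP /\ forall x y, in_Omega m x -> in_Omega m y ->
  Rabs (phi m * Rx1 m x - phi m * Rx1 m y) <= cP * dist2 x y.
Proof.
  destruct hr1_lip as [L HL]. exists (phi m * Rabs L). split. apply Rmult_le_pos; [lra| apply Rabs_pos].
  intros x y Hx Hy. specialize (HL x y Hx Hy). cbv beta in HL.
  assert (Hd : 0 <= dist2 x y) by (unfold dist2; apply sqrt_pos).
  replace (phi m * Rx1 m x - phi m * Rx1 m y) with (phi m * alpha m * (r1 m (tau m x) - r1 m (tau m y)))
    by (unfold Rx1, Rt1; ring).
  rewrite Rabs_mult, Rabs_mult, (Rabs_right (phi m)), (Rabs_right (alpha m)) by lra.
  assert (L * dist2 x y <= Rabs L * dist2 x y) by (apply Rmult_le_compat_r; [auto| apply Rle_abs]).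
  assert (0 <= Rabs (r1 m (tau m x) - r1 m (tau m y))) by apply Rabs_pos.
  assert (alpha m * Rabs (r1 m (tau m x) - r1 m (tau m y)) <= Rabs (r1 m (tau m x) - r1 m (tau m y))) by nra.
  assert (0 <= Rabs L) by apply Rabs_pos.
  nra.
Qed.
Lemma P2_lip : exists cP, 0 <= cP /\ forall x y, in_Omega m x -> in_Omega m y ->
  Rabs (phi m * Rx2 m x - phi m * Rx2 m y) <= cP * dist2 x y.
Proof.
  destruct hr2_lip as [L HL]. exists (phi m * Rabs L). split. apply Rmult_le_pos; [lra| apply Rabs_pos].
  intros x y Hx Hy. specialize (HL x y Hx Hy). cbv beta in HL.
  assert (Hd : 0 <= dist2 x y) by (unfold dist2; apply sqrt_pos).
  replace (phi m * Rx2 m x - phi m * Rx2 m y) with (phi m * alpha m * (r2 m (tau m x) - r2 m (tau m y)))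
    by (unfold Rx2, Rt2; ring).
  rewrite Rabs_mult, Rabs_mult, (Rabs_right (phi m)), (Rabs_right (alpha m)) by lra.
  assert (L * dist2 x y <= Rabs L * dist2 x y) by (apply Rmult_le_compat_r; [auto| apply Rle_abs]).
  assert (0 <= Rabs (r2 m (tau m x) - r2 m (tau m y))) by apply Rabs_pos.
  assert (alpha m * Rabs (r2 m (tau m x) - r2 m (tau m y)) <= Rabs (r2 m (tau m x) - r2 m (tau m y))) by nra.
  assert (0 <= Rabs L) by apply Rabs_pos.
  nra.
Qed.

Lemma fD1 a b c : 0 <= a -> a < b -> b <= B_1 m -> 0 <= c <= B_2 m -> fld1 m (b, c) < fld1 m (a, c).
Proof.
  intros Ha Hab Hb Hc. unfold fld1. cbn [fst].
  assert (HR := R1_dec1 c a b Hc Ha Hab Hb).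
  assert (HS := sup_nonincr (B_1 m) (C_1 m) (F_1 m) hCB1 hF1 a b ltac:(lra)).
  assert (HD := dem_nondec (C_1 m) (F_1 m) hC1 hF1 a b ltac:(lra)).
  assert (phi m * Rx1 m (b, c) < phi m * Rx1 m (a, c)) by (apply Rmult_lt_compat_l; lra).
  destruct (Rlt_dec a (C_1 m)) as [Hl|Hl].
  - assert (HD' := dem_strict (C_1 m) (F_1 m) hC1 hF1 a b Hl Hab).
    assert (Rmin (phi m * Rx1 m (b, c)) (supply (B_1 m) (C_1 m) (F_1 m) b) <=
            Rmin (phi m * Rx1 m (a, c)) (supply (B_1 m) (C_1 m) (F_1 m) a)) by (apply Rmin_mono; lra).
    lra.
  - assert (HS' := sup_strict (B_1 m) (C_1 m) (F_1 m) hCB1 hF1 a b ltac:(lra) Hab).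
    assert (Rmin (phi m * Rx1 m (b, c)) (supply (B_1 m) (C_1 m) (F_1 m) b) <
            Rmin (phi m * Rx1 m (a, c)) (supply (B_1 m) (C_1 m) (F_1 m) a)) by (apply Rmin_smono; lra).
    lra.
Qed.

Lemma fD2 a b c : 0 <= a -> a < b -> b <= B_2 m -> 0 <= c <= B_1 m -> fld2 m (c, b) < fld2 m (c, a).
Proof.
  intros Ha Hab Hb Hc. unfold fld2. cbn [snd].
  assert (HR := R2_dec2 c a b Hc Ha Hab Hb).
  assert (HS := sup_nonincr (B_2 m) (C_2 m) (F_2 m) hCB2 hF2 a b ltac:(lra)).
  assert (HD := dem_nondec (C_2 m) (F_2 m) hC2 hF2 a b ltac:(lra)).
  assert (phi m * Rx2 m (c, b) < phi m * Rx2 m (c, a)) by (apply Rmult_lt_compat_l; lra).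
  destruct (Rlt_dec a (C_2 m)) as [Hl|Hl].
  - assert (HD' := dem_strict (C_2 m) (F_2 m) hC2 hF2 a b Hl Hab).
    assert (Rmin (phi m * Rx2 m (c, b)) (supply (B_2 m) (C_2 m) (F_2 m) b) <=
            Rmin (phi m * Rx2 m (c, a)) (supply (B_2 m) (C_2 m) (F_2 m) a)) by (apply Rmin_mono; lra).
    lra.
  - assert (HS' := sup_strict (B_2 m) (C_2 m) (F_2 m) hCB2 hF2 a b ltac:(lra) Hab).
    assert (Rmin (phi m * Rx2 m (c, b)) (supply (B_2 m) (C_2 m) (F_2 m) b) <
            Rmin (phi m * Rx2 m (c, a)) (supply (B_2 m) (C_2 m) (F_2 m) a)) by (apply Rmin_smono; lra).
    lra.
Qed.

Lemma fM1 a c d : 0 <= a <= B_1 m -> 0 <= c -> c <= d -> d <= B_2 m -> fld1 m (a, c) <= fld1 m (a, d).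
Proof.
  intros Ha Hc Hcd Hd. unfold fld1. cbn [fst].
  assert (Rx1 m (a, c) <= Rx1 m (a, d)).
  { destruct Hcd as [Hlt|Heq]. left. apply R1_inc2; auto. rewrite Heq. lra. }
  assert (phi m * Rx1 m (a, c) <= phi m * Rx1 m (a, d)) by (apply Rmult_le_compat_l; lra).
  assert (Rmin (phi m * Rx1 m (a, c)) (supply (B_1 m) (C_1 m) (F_1 m) a) <=
          Rmin (phi m * Rx1 m (a, d)) (supply (B_1 m) (C_1 m) (F_1 m) a)) by (apply Rmin_mono; lra).
  lra.
Qed.

Lemma fM2 a c d : 0 <= a <= B_2 m -> 0 <= c -> c <= d -> d <= B_1 m -> fld2 m (c, a) <= fld2 m (d, a).
Proof.
  intros Ha Hc Hcd Hd. unfold fld2. cbn [snd].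
  assert (Rx2 m (c, a) <= Rx2 m (d, a)).
  { destruct Hcd as [Hlt|Heq]. left. apply R2_inc1; auto. rewrite Heq. lra. }
  assert (phi m * Rx2 m (c, a) <= phi m * Rx2 m (d, a)) by (apply Rmult_le_compat_l; lra).
  assert (Rmin (phi m * Rx2 m (c, a)) (supply (B_2 m) (C_2 m) (F_2 m) a) <=
          Rmin (phi m * Rx2 m (d, a)) (supply (B_2 m) (C_2 m) (F_2 m) a)) by (apply Rmin_mono; lra).
  lra.
Qed.

Lemma fZ1 c : 0 <= c <= B_2 m -> 0 <= fld1 m (0, c).
Proof.
  intros Hc. unfold fld1. cbn [fst].
  rewrite sup_lt, dem_lt by lra.
  assert (0 <= Rx1 m (0, c)) by (apply R1_nonneg; split; simpl; lra).
  assert (0 <= phi m * Rx1 m (0, c)) by (apply Rmult_le_pos; lra).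
  rewrite Rmult_0_r. unfold Rmin. destruct Rle_dec; lra.
Qed.

Lemma fZ2 c : 0 <= c <= B_1 m -> 0 <= fld2 m (c, 0).
Proof.
  intros Hc. unfold fld2. cbn [snd].
  rewrite sup_lt, dem_lt by lra.
  assert (0 <= Rx2 m (c, 0)) by (apply R2_nonneg; split; simpl; lra).
  assert (0 <= phi m * Rx2 m (c, 0)) by (apply Rmult_le_pos; lra).
  rewrite Rmult_0_r. unfold Rmin. destruct Rle_dec; lra.
Qed.

Lemma fT1 c : 0 <= c <= B_2 m -> fld1 m (B_1 m, c) < 0.
Proof.
  intros Hc. unfold fld1. cbn [fst].
  rewrite sup_ge, dem_ge by lra. rewrite Rminus_diag, Rmult_0_r.
  unfold Rmin. destruct Rle_dec; lra.
Qed.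

Lemma fT2 c : 0 <= c <= B_1 m -> fld2 m (c, B_2 m) < 0.
Proof.
  intros Hc. unfold fld2. cbn [snd].
  rewrite sup_ge, dem_ge by lra. rewrite Rminus_diag, Rmult_0_r.
  unfold Rmin. destruct Rle_dec; lra.
Qed.

Lemma f1_lip : exists K, 0 < K /\ forall x y, in_Omega m x -> in_Omega m y ->
  Rabs (fld1 m x - fld1 m y) <= K * dist2 x y.
Proof.
  destruct P1_lip as [cP [HcP HP]].
  apply (fld_lip_gen (fun x => phi m * Rx1 m x) fst (B_1 m) (C_1 m) (F_1 m) (in_Omega m) cP); auto.
  apply dist2_ge1.
Qed.

Lemma f2_lip : exists K, 0 < K /\ forall x y, in_Omega m x -> in_Omega m y ->
  Rabs (fld2 m x - fld2 m y) <= K * dist2 x y.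
Proof.
  destruct P2_lip as [cP [HcP HP]].
  apply (fld_lip_gen (fun x => phi m * Rx2 m x) snd (B_2 m) (C_2 m) (F_2 m) (in_Omega m) cP); auto.
  apply dist2_ge2.
Qed.
Definition meq (x : R * R) := in_Omega m x /\ fld1 m x = 0 /\ fld2 m x = 0.

Lemma char1 x : meq x -> (fst x < C_1 m /\ F_1 m / C_1 m * fst x = phi m * Rx1 m x) \/
                          (fst x = C_1 m /\ F_1 m <= phi m * Rx1 m x).
Proof. intros [[H1 H2] [E1 E2]]. apply (link_char (B_1 m)); auto. Qed.

Lemma char2 x : meq x -> (snd x < C_2 m /\ F_2 m / C_2 m * snd x = phi m * Rx2 m x) \/
                          (snd x = C_2 m /\ F_2 m <= phi m * Rx2 m x).
Proof. intros [[H1 H2] [E1 E2]]. apply (link_char (B_2 m)); auto. Qed.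

Lemma R1_le2 a u w : 0 <= a <= B_1 m -> 0 <= u -> u <= w -> w <= B_2 m -> Rx1 m (a, u) <= Rx1 m (a, w).
Proof. intros. destruct H1 as [Hl|He]. left; apply R1_inc2; auto. rewrite He; lra. Qed.

Lemma eq_lt1 x y : meq x -> meq y -> fst x < fst y -> False.
Proof.
  intros Hx Hy Hlt.
  assert (Cx1 := char1 x Hx). assert (Cy1 := char1 y Hy).
  assert (Cx2 := char2 x Hx). assert (Cy2 := char2 y Hy).
  destruct Hx as [[Ox1 Ox2] _]. destruct Hy as [[Oy1 Oy2] _].
  assert (Sx := R_sum x ltac:(split; auto)). assert (Sy := R_sum y ltac:(split; auto)).
  destruct x as [x1 x2]. destruct y as [y1 y2]. simpl in *.
  assert (Hab : Rx1 m (x1, x2) < Rx1 m (y1, y2)).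
  { apply Rnot_le_lt. intro Hle.
    assert (phi m * Rx1 m (y1, y2) <= phi m * Rx1 m (x1, x2)) by (apply Rmult_le_compat_l; lra).
    assert (y1 <= x1) by (eapply (link_mono (C_1 m) (F_1 m)); eauto). lra. }
  assert (Hx2 : x2 < y2).
  { apply Rnot_le_lt. intro Hle.
    assert (Rx1 m (x1, y2) <= Rx1 m (x1, x2)) by (apply R1_le2; lra).
    assert (Rx1 m (y1, y2) < Rx1 m (x1, y2)) by (apply R1_dec1; lra). lra. }
  assert (phi m * Rx2 m (x1, x2) < phi m * Rx2 m (y1, y2)).
  { apply Rnot_le_lt. intro Hle.
    assert (y2 <= x2) by (eapply (link_mono (C_2 m) (F_2 m)); eauto). lra. }
  assert (Rx2 m (x1, x2) < Rx2 m (y1, y2)).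
  { apply Rmult_lt_reg_l with (phi m); auto. }
  lra.
Qed.

Lemma eq_lt2 x y : meq x -> meq y -> fst x = fst y -> snd x < snd y -> False.
Proof.
  intros Hx Hy Heq Hlt.
  assert (Cx2 := char2 x Hx). assert (Cy2 := char2 y Hy).
  destruct Hx as [[Ox1 Ox2] _]. destruct Hy as [[Oy1 Oy2] _].
  assert (Sx := R_sum x ltac:(split; auto)). assert (Sy := R_sum y ltac:(split; auto)).
  destruct x as [x1 x2]. destruct y as [y1 y2]. simpl in *. subst y1.
  assert (Rx1 m (x1, x2) < Rx1 m (x1, y2)) by (apply R1_inc2; lra).
  assert (phi m * Rx2 m (x1, x2) < phi m * Rx2 m (x1, y2)).
  { apply Rnot_le_lt. intro Hle.
    assert (y2 <= x2) by (eapply (link_mono (C_2 m) (F_2 m)); eauto). lra. }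
  assert (Rx2 m (x1, x2) < Rx2 m (x1, y2)).
  { apply Rmult_lt_reg_l with (phi m); auto. }
  lra.
Qed.

Lemma mUniq x y : meq x -> meq y -> x = y.
Proof.
  intros Hx Hy.
  destruct (Rtotal_order (fst x) (fst y)) as [H|[H|H]].
  - exfalso. apply (eq_lt1 x y); auto.
  - destruct (Rtotal_order (snd x) (snd y)) as [H'|[H'|H']].
    + exfalso. apply (eq_lt2 x y); auto.
    + destruct x, y; simpl in *; subst; auto.
    + exfalso. apply (eq_lt2 y x); auto.
  - exfalso. apply (eq_lt1 y x); auto.
Qed.

Lemma mPos x : meq x -> 0 < fst x /\ 0 < snd x.
Proof.
  intros Hx.
  assert (Cx1 := char1 x Hx). assert (Cx2 := char2 x Hx).
  destruct Hx as [[Ox1 Ox2] _].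
  assert (Sx := R_sum x ltac:(split; auto)).
  destruct x as [x1 x2]. simpl in *.
  assert (N00 := R1_nonneg (0, 0) ltac:(split; simpl; lra)).
  assert (N00' := R2_nonneg (0, 0) ltac:(split; simpl; lra)).
  assert (S00 := R_sum (0, 0) ltac:(split; simpl; lra)).
  split.
  - apply Rnot_le_lt. intro Hle. assert (x1 = 0) by lra. subst x1.
    destruct Cx1 as [[_ E]|[E _]]; [|lra]. rewrite Rmult_0_r in E.
    assert (Rx1 m (0, x2) = 0).
    { apply Rmult_eq_reg_l with (phi m); lra. }
    destruct (Req_dec x2 0) as [->|Hne].
    + destruct Cx2 as [[_ E2]|[E2 _]]; [|lra]. rewrite Rmult_0_r in E2.
      assert (phi m * Rx2 m (0, 0) = phi m) by (replace (Rx2 m (0,0)) with 1 by lra; ring). lra.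
    + assert (Rx1 m (0, 0) < Rx1 m (0, x2)) by (apply R1_inc2; lra). lra.
  - apply Rnot_le_lt. intro Hle. assert (x2 = 0) by lra. subst x2.
    destruct Cx2 as [[_ E]|[E _]]; [|lra]. rewrite Rmult_0_r in E.
    assert (Rx2 m (x1, 0) = 0).
    { apply Rmult_eq_reg_l with (phi m); lra. }
    destruct (Req_dec x1 0) as [->|Hne].
    + destruct Cx1 as [[_ E2]|[E2 _]]; [|lra]. rewrite Rmult_0_r in E2.
      assert (phi m * Rx1 m (0, 0) = phi m) by (replace (Rx1 m (0,0)) with 1 by lra; ring). lra.
    + assert (Rx2 m (0, 0) < Rx2 m (x1, 0)) by (apply R2_inc1; lra). lra.
Qed.

Theorem model_main : exists xb : R * R,
    is_equilibrium m xb /\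
    (forall y, is_equilibrium m y -> y = xb) /\
    lyapunov_stable m xb /\
    globally_attractive m xb.
Proof.
  destruct f1_lip as [K1 [HK1 L1]]. destruct f2_lip as [K2 [HK2 L2]].
  destruct (lip_sep (fld1 m) (B_1 m) (B_2 m) K1 HK1 L1) as [CA1 CC1].
  destruct (lip_sep (fld2 m) (B_1 m) (B_2 m) K2 HK2 L2) as [CA2 CC2].
  destruct (gen_main (B_1 m) (B_2 m) (fld1 m) (fld2 m) hB1 hB2 fD1 fM1 fZ1 fT1 CA1 CC1 fD2 fM2 fZ2 fT2
     (fun a c Ha Hc => CC2 c a Hc Ha) (fun a c Ha Hc => CA2 c a Hc Ha) mUniq mPos) as [xb [H1 [H2 [H3 H4]]]].
  exists xb. split; [exact H1|]. split; [exact H2|]. split; [exact H3|exact H4].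
Qed.
End Model.

Theorem theorem2 (m : model)
  (* positive parameters, C_i < B_i *)
  (hB1 : 0 < B_1 m) (hB2 : 0 < B_2 m) (hC1 : 0 < C_1 m) (hC2 : 0 < C_2 m)
  (hF1 : 0 < F_1 m) (hF2 : 0 < F_2 m)
  (hCB1 : C_1 m < B_1 m) (hCB2 : C_2 m < B_2 m)
  (hphi : 0 < phi m)
  (* (A1) *)
  (A1 : phi m < F_1 m + F_2 m)
  (* (A2)-(A3) *)
  (halpha : 0 < alpha m <= 1)
  (hr0 : 0 <= r01 m /\ 0 <= r02 m /\ r01 m + r02 m = 1)
  (htau1 : forall s, 0 <= s <= B_1 m ->
      ex_derive (tau1 m) s /\ continuous (Derive (tau1 m)) s)
  (htau2 : forall s, 0 <= s <= B_2 m ->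
      ex_derive (tau2 m) s /\ continuous (Derive (tau2 m)) s)
  (htau1_incr : forall a b, 0 <= a <= B_1 m -> 0 <= b <= B_1 m -> a < b -> tau1 m a < tau1 m b)
  (htau2_incr : forall a b, 0 <= a <= B_2 m -> 0 <= b <= B_2 m -> a < b -> tau2 m a < tau2 m b)
  (hr_bounds : forall x, in_Omega m x ->
      0 <= r1 m (tau m x) <= 1 /\ 0 <= r2 m (tau m x) <= 1)
  (hr_sum : forall x, in_Omega m x -> r1 m (tau m x) + r2 m (tau m x) = 1)
  (hr1_lip : lipschitz_on_Omega m (fun x => r1 m (tau m x)))
  (hr2_lip : lipschitz_on_Omega m (fun x => r2 m (tau m x)))
  (hr1_C1 : C1_on_Omega m (fun x => r1 m (tau m x)))
  (hr2_C1 : C1_on_Omega m (fun x => r2 m (tau m x)))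
  (* (A4): dR_1/dtau_2 > 0 and dR_2/dtau_1 > 0 (at every tau(x), x in Omega) *)
  (A4_12 : forall x, in_Omega m x -> exists d, 0 < d /\
      is_derive (fun s => Rt1 m (fst (tau m x), s)) (snd (tau m x)) d)
  (A4_21 : forall x, in_Omega m x -> exists d, 0 < d /\
      is_derive (fun s => Rt2 m (s, snd (tau m x))) (fst (tau m x)) d)
  (* (A5) *)
  (A5_1 : F_1 m > (1 - alpha m) * phi m * r01 m)
  (A5_2 : F_2 m > (1 - alpha m) * phi m * r02 m)
  (* (A6) *)
  (A6_1 : phi m < E_1 m)
  (A6_2 : phi m < E_2 m) :
  exists xb : R * R,
    is_equilibrium m xb /\
    (forall y, is_equilibrium m y -> y = xb) /\
    lyapunov_stable m xb /\
    globally_attractive m xb.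

Proof.
  eapply model_main; eauto.
Qed.
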